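(* Let $\Delta v>0$, $v_j=j\Delta v$ ($j\in\mathbb{Z}$), $v_{j+1/2}=(v_j+v_{j+1})/2$. For a real sequence $(f_j)_{j\in\mathbb{Z}}$ (with all sums below absolutely convergent, $n>0$, positive temperatures) define $$\breve f_{j+1/2}=-\tfrac{1}{16}f_{j-1}+\tfrac{9}{16}f_j+\tfrac{9}{16}f_{j+1}-\tfrac{1}{16}f_{j+2},$$ $$n=\Delta v\sum_j f_j,\qquad n\breve u=\Delta v\sum_j v_{j+1/2}\breve f_{j+1/2},\qquad n\breve T=\Delta v\sum_j (v_{j+1/2}-\breve u)^2\breve f_{j+1/2},$$ $$\bar Q^{[4]}_j=\frac{(v_{j+1/2}-\breve u)\breve f_{j+1/2}-(v_{j-1/2}-\breve u)\breve f_{j-1/2}}{\Delta v}+\breve T\,\frac{-f_{j-2}+28f_{j-1}-54f_j+28f_{j+1}-f_{j+2}}{24\Delta v^2}.$$ Let also $f_{j+1/2}=(f_{j+1}+f_j)/2$, $n\tilde u=\sum_j v_{j+1/2}f_{j+1/2}\Delta v$, $n\tilde T=\sum_j (v_{j+1/2}-\tilde u)^2f_{j+1/2}\Delta v$ and $$Q_j=\frac{1}{\Delta v}\Big[f_{j+1/2}(v_{j+1/2}-\tilde u)-f_{j-1/2}(v_{j-1/2}-\tilde u)\Big]+\frac{\tilde T}{\Delta v^2}(f_{j+1}-2f_j+f_{j-1}),$$ and define $$Q^{[4]}_j=\bar Q^{[4]}_j-\frac{1}{24}\big[Q_{j+1}-2Q_j+Q_{j-1}\big].$$ Then: (i) if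 $f_j=f(v_j)$ for a smooth, sufficiently rapidly decaying function $f$, one has $Q(f)(v_j)-Q^{[4]}_j=\mathcal{O}(\Delta v^4)$, where $Q(f)=\partial_v\big((v-u_f)f+T_f\partial_vf\big)$ with $n_f=\int f\,dv$, $n_fu_f=\int vf\,dv$, $n_fT_f=\int|v-u_f|^2f\,dv$; and (ii) for every such sequence, $$\sum_j Q^{[4]}_j\begin{pmatrix}1\\ v_j\\ v_j^2/2\end{pmatrix}\Delta v=\begin{pmatrix}0\\0\\0\end{pmatrix}.$$
   Context: This is a fourth-order velocity discretization of the one-dimensional Fokker--Planck operator $Q(f)=\partial_v\big((v-u_f)f+T_f\partial_v f\big)$. *)

(* Defs.v *)
From Stdlib Require Import Reals ZArith.
From Coquelicot Require Import Coquelicot.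
Open Scope R_scope.

Definition zsummable (a : Z -> R) : Prop :=
  ex_series (fun k : nat => Rabs (a (Z.of_nat k))) /\
  ex_series (fun k : nat => Rabs (a (- Z.of_nat k - 1)%Z)).

Definition zsum (a : Z -> R) : R :=
  Series (fun k : nat => a (Z.of_nat k)) +
  Series (fun k : nat => a (- Z.of_nat k - 1)%Z).

Definition vj (dv : R) (j : Z) : R := IZR j * dv.
Definition vhalf (dv : R) (j : Z) : R := (vj dv j + vj dv (j + 1)) / 2.

Definition fbreve (f : Z -> R) (j : Z) : R :=
  - (1/16) * f (j - 1)%Z + (9/16) * f j + (9/16) * f (j + 1)%Z
  - (1/16) * f (j + 2)%Z.

Definition dens (dv : R) (f : Z -> R) : R := dv * zsum f.

Definition ubreve (dv : R) (f : Z -> R) : R :=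
  dv * zsum (fun j => vhalf dv j * fbreve f j) / dens dv f.

Definition Tbreve (dv : R) (f : Z -> R) : R :=
  dv * zsum (fun j => (vhalf dv j - ubreve dv f) ^ 2 * fbreve f j) / dens dv f.

Definition Qbar4 (dv : R) (f : Z -> R) (j : Z) : R :=
  ((vhalf dv j - ubreve dv f) * fbreve f j
   - (vhalf dv (j - 1) - ubreve dv f) * fbreve f (j - 1)%Z) / dv
  + Tbreve dv f *
    (- f (j - 2)%Z + 28 * f (j - 1)%Z - 54 * f j + 28 * f (j + 1)%Z
     - f (j + 2)%Z) / (24 * dv ^ 2).

Definition fmid (f : Z -> R) (j : Z) : R := (f (j + 1)%Z + f j) / 2.

Definition utilde (dv : R) (f : Z -> R) : R :=
  zsum (fun j => vhalf dv j * fmid f j * dv) / dens dv f.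

Definition Ttilde (dv : R) (f : Z -> R) : R :=
  zsum (fun j => (vhalf dv j - utilde dv f) ^ 2 * fmid f j * dv) / dens dv f.

Definition Q2 (dv : R) (f : Z -> R) (j : Z) : R :=
  / dv * (fmid f j * (vhalf dv j - utilde dv f)
          - fmid f (j - 1)%Z * (vhalf dv (j - 1) - utilde dv f))
  + Ttilde dv f / dv ^ 2 * (f (j + 1)%Z - 2 * f j + f (j - 1)%Z).

Definition Q4 (dv : R) (f : Z -> R) (j : Z) : R :=
  Qbar4 dv f j - / 24 * (Q2 dv f (j + 1)%Z - 2 * Q2 dv f j + Q2 dv f (j - 1)%Z).

Definition Rint (g : R -> R) : R :=
  RInt_gen g (Rbar_locally m_infty) (Rbar_locally p_infty).

Definition nf (f : R -> R) : R := Rint f.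
Definition uf (f : R -> R) : R := Rint (fun v => v * f v) / nf f.
Definition Tf (f : R -> R) : R := Rint (fun v => (v - uf f) ^ 2 * f v) / nf f.

Definition QFP (f : R -> R) (v : R) : R :=
  Derive (fun w => (w - uf f) * f w + Tf f * Derive f w) v.

Definition smooth (f : R -> R) : Prop := forall (n : nat) (x : R), ex_derive_n f n x.

Definition rapidly_decaying (f : R -> R) : Prop :=
  forall n m : nat, exists C : R, forall x : R, Rabs x ^ m * Rabs (Derive_n f n x) <= C.

(* Main.v *)
Require Import Defs.
From Stdlib Require Import Reals ZArith.
From Coquelicot Require Import Coquelicot.
From Stdlib Require Import Lra Lia.
Open Scope R_scope.

Lemma exs_le (a b : nat -> R) :
  (forall n, Rabs (a n) <= b n) -> ex_series b -> ex_series a.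
Proof. intros H Hb. apply (ex_series_le a b); [intro n; apply H | exact Hb]. Qed.

Lemma exs_abs (a : nat -> R) : ex_series (fun n => Rabs (a n)) -> ex_series a.
Proof. apply ex_series_Rabs. Qed.

Lemma exs_plus (a b : nat -> R) : ex_series a -> ex_series b ->
  ex_series (fun n => a n + b n).
Proof. intros. apply (ex_series_plus a b); auto. Qed.

Lemma exs_scal (c : R) (a : nat -> R) : ex_series a -> ex_series (fun n => c * a n).
Proof. intros. apply (ex_series_scal_l c a); auto. Qed.

Lemma exs_ext (a b : nat -> R) : (forall n, a n = b n) -> ex_series a -> ex_series b.
Proof. intros. apply (ex_series_ext a b); auto. Qed.

Lemma exs_S (a : nat -> R) : ex_series a <-> ex_series (fun k => a (S k)).
Proof. apply ex_series_incr_1. Qed.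

Lemma zsummable_ext a b : (forall j, a j = b j) -> zsummable a -> zsummable b.
Proof.
  intros E [H1 H2]; split; [eapply exs_ext; [|exact H1] | eapply exs_ext; [|exact H2]];
  intro n; simpl; now rewrite E.
Qed.

Lemma zsum_ext a b : (forall j, a j = b j) -> zsum a = zsum b.
Proof.
  intros E; unfold zsum; f_equal; apply Series_ext; intro; now rewrite E.
Qed.

Lemma zsummable_plus a b : zsummable a -> zsummable b -> zsummable (fun j => a j + b j).
Proof.
  intros [A1 A2] [B1 B2]; split.
  - apply exs_le with (b := fun n => Rabs (a (Z.of_nat n)) + Rabs (b (Z.of_nat n))).
    + intro n; rewrite Rabs_Rabsolu; apply Rabs_triang.
    + now apply exs_plus.
  - apply exs_le with (b := fun n => Rabs (a (- Z.of_nat n - 1)%Z) + Rabs (b (- Z.of_nat n - 1)%Z)).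
    + intro n; rewrite Rabs_Rabsolu; apply Rabs_triang.
    + now apply exs_plus.
Qed.

Lemma zsummable_scal c a : zsummable a -> zsummable (fun j => c * a j).
Proof.
  intros [A1 A2]; split.
  - apply exs_ext with (a := fun n => Rabs c * Rabs (a (Z.of_nat n))).
    + intro; now rewrite Rabs_mult.
    + now apply exs_scal.
  - apply exs_ext with (a := fun n => Rabs c * Rabs (a (- Z.of_nat n - 1)%Z)).
    + intro; now rewrite Rabs_mult.
    + now apply exs_scal.
Qed.

Lemma zsummable_le a b : (forall j, Rabs (a j) <= Rabs (b j)) -> zsummable b -> zsummable a.
Proof.
  intros H [B1 B2]; split; [eapply exs_le; [|exact B1] | eapply exs_le; [|exact B2]];
  intro n; rewrite Rabs_Rabsolu; apply H.
Qed.

Lemma zsummable_ex a : zsummable a ->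
  ex_series (fun k => a (Z.of_nat k)) /\ ex_series (fun k => a (- Z.of_nat k - 1)%Z).
Proof. intros [A B]; split; now apply exs_abs. Qed.

Lemma zsum_plus a b : zsummable a -> zsummable b ->
  zsum (fun j => a j + b j) = zsum a + zsum b.
Proof.
  intros Ha Hb. apply zsummable_ex in Ha as [A1 A2]. apply zsummable_ex in Hb as [B1 B2].
  unfold zsum. rewrite (Series_plus _ _ A1 B1), (Series_plus _ _ A2 B2). ring.
Qed.

Lemma zsum_scal c a : zsum (fun j => c * a j) = c * zsum a.
Proof.
  unfold zsum. rewrite !Series_scal_l. ring.
Qed.

Lemma zsummable_shift1 a : zsummable a -> zsummable (fun j => a (j + 1)%Z).
Proof.
  intros [A1 A2]; split.
  - apply exs_S in A1. eapply exs_ext; [|exact A1]. intro n; cbv beta; rewrite ?Nat2Z.inj_succ.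
    f_equal; f_equal; lia.
  - apply exs_S. eapply exs_ext; [|exact A2]. intro n; cbv beta; rewrite ?Nat2Z.inj_succ. f_equal; f_equal; lia.
Qed.

Lemma zsummable_shiftm1 a : zsummable a -> zsummable (fun j => a (j - 1)%Z).
Proof.
  intros [A1 A2]; split.
  - apply exs_S. eapply exs_ext; [|exact A1]. intro n; cbv beta; rewrite ?Nat2Z.inj_succ. f_equal; f_equal; lia.
  - apply exs_S in A2. eapply exs_ext; [|exact A2]. intro n; cbv beta; rewrite ?Nat2Z.inj_succ. f_equal; f_equal; lia.
Qed.

Lemma zsum_shift1 a : zsummable a -> zsum (fun j => a (j + 1)%Z) = zsum a.
Proof.
  intros Ha. pose proof (zsummable_shift1 a Ha) as Hb.
  apply zsummable_ex in Ha as [A1 A2]. apply zsummable_ex in Hb as [B1 B2].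
  unfold zsum.
  rewrite (Series_incr_1 (fun k => a (Z.of_nat k)) A1).
  rewrite (Series_incr_1 (fun k => a (- Z.of_nat k - 1 + 1)%Z) B2).
  replace (Series (fun k => a (Z.of_nat k + 1)%Z)) with (Series (fun k => a (Z.of_nat (S k)))).
  2:{ apply Series_ext; intro; rewrite ?Nat2Z.inj_succ; f_equal; lia. }
  replace (Series (fun k => a (- Z.of_nat (S k) - 1 + 1)%Z)) with (Series (fun k => a (- Z.of_nat k - 1)%Z)).
  2:{ apply Series_ext; intro; rewrite ?Nat2Z.inj_succ; f_equal; lia. }
  replace (a (- Z.of_nat 0 - 1 + 1)%Z) with (a (Z.of_nat 0)) by (f_equal; lia).
  ring.
Qed.

Lemma zsum_shiftm1 a : zsummable a -> zsum (fun j => a (j - 1)%Z) = zsum a.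
Proof.
  intros Ha. pose proof (zsummable_shiftm1 a Ha) as Hb.
  rewrite <- (zsum_shift1 _ Hb). apply zsum_ext; intro; f_equal; lia.
Qed.

Lemma zshift_nat n : forall a, zsummable a ->
  zsummable (fun j => a (j + Z.of_nat n)%Z) /\ zsum (fun j => a (j + Z.of_nat n)%Z) = zsum a.
Proof.
  induction n; intros a Ha.
  - split; [eapply zsummable_ext; [|exact Ha] | apply zsum_ext]; intro; f_equal; lia.
  - destruct (IHn _ (zsummable_shift1 a Ha)) as [H1 H2].
    split.
    + eapply zsummable_ext; [|exact H1]; intro; cbv beta; rewrite ?Nat2Z.inj_succ; f_equal; lia.
    + rewrite <- (zsum_shift1 a Ha), <- H2. apply zsum_ext; intro; f_equal; lia.
Qed.

Lemma zshift_negnat n : forall a, zsummable a ->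
  zsummable (fun j => a (j - Z.of_nat n)%Z) /\ zsum (fun j => a (j - Z.of_nat n)%Z) = zsum a.
Proof.
  induction n; intros a Ha.
  - split; [eapply zsummable_ext; [|exact Ha] | apply zsum_ext]; intro; f_equal; lia.
  - destruct (IHn _ (zsummable_shiftm1 a Ha)) as [H1 H2].
    split.
    + eapply zsummable_ext; [|exact H1]; intro; cbv beta; rewrite ?Nat2Z.inj_succ; f_equal; lia.
    + rewrite <- (zsum_shiftm1 a Ha), <- H2. apply zsum_ext; intro; f_equal; lia.
Qed.

Lemma zshift s a : zsummable a ->
  zsummable (fun j => a (j + s)%Z) /\ zsum (fun j => a (j + s)%Z) = zsum a.
Proof.
  intros Ha. destruct (Z_le_gt_dec 0 s).
  - destruct (zshift_nat (Z.to_nat s) a Ha) as [H1 H2].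
    rewrite Z2Nat.id in H1, H2 by lia. auto.
  - destruct (zshift_negnat (Z.to_nat (-s)) a Ha) as [H1 H2].
    rewrite Z2Nat.id in H1, H2 by lia.
    split; [eapply zsummable_ext; [|exact H1] | rewrite <- H2; apply zsum_ext]; intro; cbv beta; f_equal; lia.
Qed.

Lemma exs_0 : ex_series (fun _ : nat => 0).
Proof.
  apply exs_ext with (a := fun n => 0 * (0 ^ n)); [intro; ring|].
  apply exs_scal, ex_series_geom. rewrite Rabs_R0; lra.
Qed.

Lemma Series_0' : Series (fun _ : nat => 0) = 0.
Proof.
  rewrite (Series_ext _ (fun n => 0 * 0 ^ n)) by (intro; ring).
  rewrite Series_scal_l. ring.
Qed.

Definition mom (f : Z -> R) (i : nat) (k : Z) : R := IZR k ^ i * f k.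

Fixpoint lin (f : Z -> R) (L : list (R * nat * Z)) (j : Z) : R :=
  match L with
  | nil => 0
  | cons (c, i, s) L' => c * mom f i (j + s) + lin f L' j
  end.

Fixpoint linZ (Zm : nat -> R) (L : list (R * nat * Z)) : R :=
  match L with
  | nil => 0
  | cons (c, i, _) L' => c * Zm i + linZ Zm L'
  end.

Fixpoint allsum (f : Z -> R) (L : list (R * nat * Z)) : Prop :=
  match L with
  | nil => True
  | cons (_, i, _) L' => zsummable (mom f i) /\ allsum f L'
  end.

Lemma lin_summable f L : allsum f L -> zsummable (lin f L).
Proof.
  induction L as [|[[c i] s] L IH]; simpl; intros H.
  - split; apply exs_ext with (a := fun _ => 0); try (intro; simpl; now rewrite Rabs_R0);
    apply exs_0.
  - destruct H as [H1 H2]. apply zsummable_plus; auto.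
    apply zsummable_scal. now apply zshift.
Qed.

Lemma zsum_lin f L : allsum f L -> zsum (lin f L) = linZ (fun i => zsum (mom f i)) L.
Proof.
  induction L as [|[[c i] s] L IH]; simpl; intros H.
  - unfold zsum. rewrite !Series_0'. ring.
  - destruct H as [H1 H2].
    rewrite (zsum_plus (fun j => c * mom f i (j + s)) (lin f L)).
    + rewrite zsum_scal, IH by auto. f_equal. f_equal. now apply zshift.
    + apply zsummable_scal. now apply zshift.
    + now apply lin_summable.
Qed.

Definition L_Q4_1 (dv ub Tb ut Tt : R) : list (R*nat*Z) := (((((-1 / 24) * Tt) / (dv) + ((-1 / 24) * Tb) / (dv) + (-1 / 48) * ut + (-1 / 16) * ub + (5 / 48) * dv), 0%nat, (-2)%Z) :: (((1 / 12) * dv), 1%nat, (-2)%Z) :: ((((1 / 6) * Tt) / (dv) + ((7 / 6) * Tb) / (dv) + (1 / 24) * ut + (5 / 8) * ub + (-5 / 12) * dv), 0%nat, (-1)%Z) :: (((-2 / 3) * dv), 1%nat, (-1)%Z) :: ((((-1 / 4) * Tt) / (dv) + ((-9 / 4) * Tb) / (dv) + (5 / 8) * dv), 0%nat, (0)%Z) :: ((((1 / 6) * Tt) / (dv) + ((7 / 6) * Tb) / (dv) + (-1 / 24) * ut + (-5 / 8) * ub + (-5 / 12) * dv), 0%nat, (1)%Z) :: (((2 / 3) * dv), 1%nat, (1)%Z) :: ((((-1 / 24) * Tt) / (dv) + ((-1 / 24) * Tb) / (dv) + (1 / 48) * ut + (1 / 16) * ub + (5 / 48) * dv), 0%nat,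 (2)%Z) :: (((-1 / 12) * dv), 1%nat, (2)%Z) :: nil)%list.
Definition L_Q4_v (dv ub Tb ut Tt : R) : list (R*nat*Z) := ((((-1 / 12) * Tt + (-1 / 12) * Tb + (-1 / 24) * dv * ut + (-1 / 8) * dv * ub + (5 / 24) * dv ^ 2), 0%nat, (-2)%Z) :: (((-1 / 24) * Tt + (-1 / 24) * Tb + (-1 / 48) * dv * ut + (-1 / 16) * dv * ub + (13 / 48) * dv ^ 2), 1%nat, (-2)%Z) :: (((1 / 12) * dv ^ 2), 2%nat, (-2)%Z) :: (((1 / 6) * Tt + (7 / 6) * Tb + (1 / 24) * dv * ut + (5 / 8) * dv * ub + (-5 / 12) * dv ^ 2), 0%nat, (-1)%Z) :: (((1 / 6) * Tt + (7 / 6) * Tb + (1 / 24) * dv * ut + (5 / 8) * dv * ub + (-13 / 12) * dv ^ 2), 1%nat, (-1)%Z) :: (((-2 / 3) * dv ^ 2), 2%nat, (-1)%Z) :: (((-1 / 4) * Tt + (-9 / 4) * Tb + (5 / 8) * dv ^ 2), 1%nat, (0)%Z) :: (((-1 / 6) * Tt + (-7 / 6) * Tb + (1 / 24) * dv * ut + (5 / 8) * dv * ub + (5 / 12) * dv ^ 2), 0%nat, (1)%Z) :: (((1 / 6) * Tt + (7 / 6) * Tb + (-1 / 24) * dv * ut + (-5 / 8) * dv * ub + (-13 / 12) * dv ^ 2), 1%nat, (1)%Z) :: (((2 / 3) * dv ^ 2), 2%nat, (1)%Z) :: (((1 / 12) * Tt + (1 / 12) * Tb + (-1 / 24) * dv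 * ut + (-1 / 8) * dv * ub + (-5 / 24) * dv ^ 2), 0%nat, (2)%Z) :: (((-1 / 24) * Tt + (-1 / 24) * Tb + (1 / 48) * dv * ut + (1 / 16) * dv * ub + (13 / 48) * dv ^ 2), 1%nat, (2)%Z) :: (((-1 / 12) * dv ^ 2), 2%nat, (2)%Z) :: nil)%list.
Definition L_Q4_v2 (dv ub Tb ut Tt : R) : list (R*nat*Z) := ((((-1 / 12) * dv * Tt + (-1 / 12) * dv * Tb + (-1 / 24) * dv ^ 2 * ut + (-1 / 8) * dv ^ 2 * ub + (5 / 24) * dv ^ 3), 0%nat, (-2)%Z) :: (((-1 / 12) * dv * Tt + (-1 / 12) * dv * Tb + (-1 / 24) * dv ^ 2 * ut + (-1 / 8) * dv ^ 2 * ub + (3 / 8) * dv ^ 3), 1%nat, (-2)%Z) :: (((-1 / 48) * dv * Tt + (-1 / 48) * dv * Tb + (-1 / 96) * dv ^ 2 * ut + (-1 / 32) * dv ^ 2 * ub + (7 / 32) * dv ^ 3), 2%nat, (-2)%Z) :: (((1 / 24) * dv ^ 3), 3%nat, (-2)%Z) :: (((1 / 12) * dv * Tt + (7 / 12) * dv * Tb + (1 / 48) * dv ^ 2 * ut + (5 / 16) * dv ^ 2 * ub + (-5 / 24) * dv ^ 3), 0%nat, (-1)%Z) :: (((1 / 6) * dv * Tt + (7 / 6) * dv * Tb + (1 / 24) * dv ^ 2 * ut + (5 / 8) * dv ^ 2 * ub + (-3 / 4) * dv ^ 3), 1%nat, (-1)%Z) :: (((1 / 12) * dv * Tt + (7 /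 12) * dv * Tb + (1 / 48) * dv ^ 2 * ut + (5 / 16) * dv ^ 2 * ub + (-7 / 8) * dv ^ 3), 2%nat, (-1)%Z) :: (((-1 / 3) * dv ^ 3), 3%nat, (-1)%Z) :: (((-1 / 8) * dv * Tt + (-9 / 8) * dv * Tb + (5 / 16) * dv ^ 3), 2%nat, (0)%Z) :: (((1 / 12) * dv * Tt + (7 / 12) * dv * Tb + (-1 / 48) * dv ^ 2 * ut + (-5 / 16) * dv ^ 2 * ub + (-5 / 24) * dv ^ 3), 0%nat, (1)%Z) :: (((-1 / 6) * dv * Tt + (-7 / 6) * dv * Tb + (1 / 24) * dv ^ 2 * ut + (5 / 8) * dv ^ 2 * ub + (3 / 4) * dv ^ 3), 1%nat, (1)%Z) :: (((1 / 12) * dv * Tt + (7 / 12) * dv * Tb + (-1 / 48) * dv ^ 2 * ut + (-5 / 16) * dv ^ 2 * ub + (-7 / 8) * dv ^ 3), 2%nat, (1)%Z) :: (((1 / 3) * dv ^ 3), 3%nat, (1)%Z) :: (((-1 / 12) * dv * Tt + (-1 / 12) * dv * Tb + (1 / 24) * dv ^ 2 * ut + (1 / 8) * dv ^ 2 * ub + (5 / 24) * dv ^ 3), 0%nat, (2)%Z) :: (((1 / 12) * dv * Tt + (1 / 12) * dv * Tb + (-1 / 24) * dv ^ 2 * ut + (-1 / 8) * dv ^ 2 * ub + (-3 / 8) * dv ^ 3), 1%nat, (2)%Z) :: (((-1 / 48) * dv * Tt + (-1 / 48) * dv * Tb + (1 / 96) * dv ^ 2 * ut + (1 / 32) * dv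 ^ 2 * ub + (7 / 32) * dv ^ 3), 2%nat, (2)%Z) :: (((-1 / 24) * dv ^ 3), 3%nat, (2)%Z) :: nil)%list.
Definition L_u (dv : R) : list (R*nat*Z) := ((((-3 / 32) * dv), 0%nat, (-1)%Z) :: (((-1 / 16) * dv), 1%nat, (-1)%Z) :: (((9 / 32) * dv), 0%nat, (0)%Z) :: (((9 / 16) * dv), 1%nat, (0)%Z) :: (((-9 / 32) * dv), 0%nat, (1)%Z) :: (((9 / 16) * dv), 1%nat, (1)%Z) :: (((3 / 32) * dv), 0%nat, (2)%Z) :: (((-1 / 16) * dv), 1%nat, (2)%Z) :: nil)%list.
Definition L_T (dv ub : R) : list (R*nat*Z) := ((((-1 / 16) * ub ^ 2 + (3 / 16) * dv * ub + (-9 / 64) * dv ^ 2), 0%nat, (-1)%Z) :: (((1 / 8) * dv * ub + (-3 / 16) * dv ^ 2), 1%nat, (-1)%Z) :: (((-1 / 16) * dv ^ 2), 2%nat, (-1)%Z) :: (((9 / 16) * ub ^ 2 + (-9 / 16) * dv * ub + (9 / 64) * dv ^ 2), 0%nat, (0)%Z) :: (((-9 / 8) * dv * ub + (9 / 16) * dv ^ 2), 1%nat, (0)%Z) :: (((9 / 16) * dv ^ 2), 2%nat, (0)%Z) :: (((9 / 16) * ub ^ 2 + (9 / 16) * dv * ub + (9 / 64) * dv ^ 2), 0%nat, (1)%Z) :: (((-9 / 8) * dv * ub + (-9 / 16) * dv ^ 2), 1%nat, (1)%Z) :: (((9 / 16) * dv ^ 2), 2%nat, (1)%Z) :: (((-1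 / 16) * ub ^ 2 + (-3 / 16) * dv * ub + (-9 / 64) * dv ^ 2), 0%nat, (2)%Z) :: (((1 / 8) * dv * ub + (3 / 16) * dv ^ 2), 1%nat, (2)%Z) :: (((-1 / 16) * dv ^ 2), 2%nat, (2)%Z) :: nil)%list.
Definition L_ut (dv : R) : list (R*nat*Z) := ((((1 / 4) * dv ^ 2), 0%nat, (0)%Z) :: (((1 / 2) * dv ^ 2), 1%nat, (0)%Z) :: (((-1 / 4) * dv ^ 2), 0%nat, (1)%Z) :: (((1 / 2) * dv ^ 2), 1%nat, (1)%Z) :: nil)%list.
Definition L_Tt (dv ut : R) : list (R*nat*Z) := ((((1 / 2) * dv * ut ^ 2 + (-1 / 2) * dv ^ 2 * ut + (1 / 8) * dv ^ 3), 0%nat, (0)%Z) :: (((-1) * dv ^ 2 * ut + (1 / 2) * dv ^ 3), 1%nat, (0)%Z) :: (((1 / 2) * dv ^ 3), 2%nat, (0)%Z) :: (((1 / 2) * dv * ut ^ 2 + (1 / 2) * dv ^ 2 * ut + (1 / 8) * dv ^ 3), 0%nat, (1)%Z) :: (((-1) * dv ^ 2 * ut + (-1 / 2) * dv ^ 3), 1%nat, (1)%Z) :: (((1 / 2) * dv ^ 3), 2%nat, (1)%Z) :: nil)%list.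

Ltac zcanon f := repeat match goal with |- context [f ?z] => progress (ring_simplify z) end.
Ltac izr_canon := repeat match goal with |- context [IZR ?z] => progress (ring_simplify z) end.


Ltac lin_pw ub Tb ut Tt f :=
  unfold Q4, Qbar4, Q2, fbreve, fmid, vhalf, vj, lin, mom;
  fold ub Tb ut Tt;
  zcanon f; izr_canon;
  rewrite ?plus_IZR, ?minus_IZR, ?opp_IZR.

Section S2.
Variable dv : R.
Variable f : Z -> R.
Hypothesis Hdv : dv <> 0.
Let ub := ubreve dv f.
Let Tb := Tbreve dv f.
Let ut := utilde dv f.
Let Tt := Ttilde dv f.

Lemma Q4_lin_1 j : Q4 dv f j * dv = lin f (L_Q4_1 dv ub Tb ut Tt) j.
Proof. unfold L_Q4_1. lin_pw ub Tb ut Tt f. field. auto. Qed.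

Lemma Q4_lin_v j : Q4 dv f j * vj dv j * dv = lin f (L_Q4_v dv ub Tb ut Tt) j.
Proof. unfold L_Q4_v. lin_pw ub Tb ut Tt f. field. auto. Qed.

Lemma Q4_lin_v2 j : Q4 dv f j * (vj dv j ^ 2 / 2) * dv = lin f (L_Q4_v2 dv ub Tb ut Tt) j.
Proof. unfold L_Q4_v2. lin_pw ub Tb ut Tt f. field. auto. Qed.

Lemma u_lin j : vhalf dv j * fbreve f j = lin f (L_u dv) j.
Proof. unfold L_u. lin_pw ub Tb ut Tt f. field. Qed.

Lemma T_lin j : (vhalf dv j - ub) ^ 2 * fbreve f j = lin f (L_T dv ub) j.
Proof. unfold L_T. lin_pw ub Tb ut Tt f. field. Qed.

Lemma ut_lin j : vhalf dv j * fmid f j * dv = lin f (L_ut dv) j.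
Proof. unfold L_ut. lin_pw ub Tb ut Tt f. field. Qed.

Lemma Tt_lin j : (vhalf dv j - ut) ^ 2 * fmid f j * dv = lin f (L_Tt dv ut) j.
Proof. unfold L_Tt. lin_pw ub Tb ut Tt f. field. Qed.

End S2.

Lemma pow_le_cube a i : 0 <= a -> (i <= 3)%nat -> a ^ i <= (1 + a) ^ 3.
Proof.
  intros Ha Hi.
  destruct i as [|[|[|[|i]]]]; simpl; try lia; nra.
Qed.

Lemma mom_summable dv f i : 0 < dv -> (i <= 3)%nat ->
  zsummable (fun j => (1 + Rabs (vj dv j)) ^ 3 * f j) -> zsummable (mom f i).
Proof.
  intros Hdv Hi H.
  assert (H1 : zsummable (fun j => vj dv j ^ i * f j)).
  { apply zsummable_le with (b := fun j => (1 + Rabs (vj dv j)) ^ 3 * f j); auto.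
    intro j. rewrite !Rabs_mult, <- RPow_abs.
    rewrite (Rabs_pos_eq ((1 + Rabs (vj dv j)) ^ 3)) by (apply pow_le; pose proof (Rabs_pos (vj dv j)); lra).
    apply Rmult_le_compat_r; [apply Rabs_pos|]. apply pow_le_cube; auto. apply Rabs_pos. }
  apply zsummable_ext with (a := fun j => (/ dv) ^ i * (vj dv j ^ i * f j)).
  - intro j. unfold mom, vj. rewrite <- Rmult_assoc, <- Rpow_mult_distr.
    f_equal. f_equal. field; lra.
  - now apply zsummable_scal.
Qed.

Theorem part2 (dv : R) (f : Z -> R) :
     0 < dv ->
     zsummable (fun j => (1 + Rabs (vj dv j)) ^ 3 * f j) ->
     0 < dens dv f -> 0 < Tbreve dv f -> 0 < Ttilde dv f ->
     zsum (fun j => Q4 dv f j * dv) = 0 /\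
     zsum (fun j => Q4 dv f j * vj dv j * dv) = 0 /\
     zsum (fun j => Q4 dv f j * (vj dv j ^ 2 / 2) * dv) = 0.
Proof.
  intros Hdv Hs Hn _ _.
  assert (Hdv0 : dv <> 0) by lra.
  assert (M : forall i, (i <= 3)%nat -> zsummable (mom f i)) by (intros i Hi; exact (mom_summable dv f i Hdv Hi Hs)).
  set (Z0 := zsum (mom f 0)). set (Z1 := zsum (mom f 1)). set (Z2 := zsum (mom f 2)).
  set (Z3 := zsum (mom f 3)).
  assert (Hd : dens dv f = dv * Z0).
  { unfold dens, Z0. f_equal. apply zsum_ext. intro; unfold mom; simpl; ring. }
  assert (HZ0 : Z0 <> 0).
  { intro E. rewrite Hd, E in Hn. lra. }
  set (ub := ubreve dv f). set (Tb := Tbreve dv f). set (ut := utilde dv f). set (Tt := Ttilde dv f).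
  assert (Hub : ub = dv * Z1 / Z0).
  { unfold ub, ubreve. rewrite (zsum_ext _ _ (u_lin dv f)).
    rewrite zsum_lin by (simpl; repeat split; apply M; lia).
    unfold L_u; simpl linZ. fold Z0 Z1 Z2 Z3. rewrite Hd. field. auto. }
  assert (HTb : Tb = ub ^ 2 - 2 * dv * ub * Z1 / Z0 + dv ^ 2 * Z2 / Z0).
  { unfold Tb, Tbreve. rewrite (zsum_ext _ _ (T_lin dv f)). fold ub.
    rewrite zsum_lin by (simpl; repeat split; apply M; lia).
    unfold L_T; simpl linZ. fold Z0 Z1 Z2 Z3. rewrite Hd. field. auto. }
  repeat split.
  - rewrite (zsum_ext _ _ (Q4_lin_1 dv f Hdv0)).
    rewrite zsum_lin by (simpl; repeat split; apply M; lia).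
    unfold L_Q4_1; simpl linZ. fold Z0 Z1 Z2 Z3. field. auto.
  - rewrite (zsum_ext _ _ (Q4_lin_v dv f Hdv0)).
    rewrite zsum_lin by (simpl; repeat split; apply M; lia).
    unfold L_Q4_v; simpl linZ. fold Z0 Z1 Z2 Z3 ub Tb ut Tt. rewrite Hub. field. auto.
  - rewrite (zsum_ext _ _ (Q4_lin_v2 dv f Hdv0)).
    rewrite zsum_lin by (simpl; repeat split; apply M; lia).
    unfold L_Q4_v2; simpl linZ. fold Z0 Z1 Z2 Z3 ub Tb ut Tt. rewrite HTb, Hub. field. auto.
Qed.

Lemma sum0_taylor (phi : R -> R) (x : R) N :
  sum_f_R0 (fun m => 0 ^ m / INR (fact m) * Derive_n phi m x) N = phi x.
Proof.
  induction N.
  - simpl. field.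
  - rewrite tech5, IHN. rewrite pow_i by lia. unfold Rdiv. ring.
Qed.

Lemma taylor_gen (phi : R -> R) (Hs : smooth phi) N x s :
  exists z, Rabs (z - x) <= Rabs s /\
   phi (x + s) = sum_f_R0 (fun m => s ^ m / INR (fact m) * Derive_n phi m x) N
                 + s ^ (S N) / INR (fact (S N)) * Derive_n phi (S N) z.
Proof.
  destruct (Rtotal_order s 0) as [Hn|[H0|Hp]].
  - set (g := fun t => phi (- t)).
    assert (Hg : forall t k, ex_derive_n g k t).
    { intros t k. apply ex_derive_n_comp_opp. apply filter_forall. intros; apply Hs. }
    assert (Dg : forall t k, Derive_n g k t = (-1) ^ k * Derive_n phi k (- t)).
    { intros t k. apply Derive_n_comp_opp. apply filter_forall. intros; apply Hs. }
    destruct (Taylor_Lagrange g N (- x) (- x - s)) as [z [Hz E]]; [lra| intros; apply Hg |].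
    exists (- z). split.
    + rewrite Rabs_left1 by lra. rewrite Rabs_left by lra. lra.
    + unfold g in E at 1. replace (- (- x - s)) with (x + s) in E by ring.
      rewrite E. f_equal.
      * apply sum_eq. intros i _. rewrite Dg. replace (- - x) with x by ring.
        replace (- x - s - - x) with (-1 * s) by ring.
        rewrite Rpow_mult_distr.
        replace ((-1) ^ i * s ^ i / INR (fact i) * ((-1) ^ i * Derive_n phi i x))
          with (((-1) ^ i * (-1) ^ i) * (s ^ i / INR (fact i) * Derive_n phi i x)).
        2:{ unfold Rdiv; ring. }
        rewrite <- Rpow_mult_distr. replace (-1 * -1) with 1 by ring. rewrite pow1. apply Rmult_1_l.
      * rewrite Dg. replace (- x - s - - x) with (-1 * s) by ring.
        rewrite Rpow_mult_distr.
        replace ((-1) ^ S N * s ^ S N / INR (fact (S N)) * ((-1) ^ S N * Derive_n phi (S N) (- z)))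
          with (((-1) ^ S N * (-1) ^ S N) * (s ^ S N / INR (fact (S N)) * Derive_n phi (S N) (- z)))
          by (unfold Rdiv; ring).
        rewrite <- Rpow_mult_distr. replace (-1 * -1) with 1 by ring. rewrite pow1. apply Rmult_1_l.
  - subst s. exists x. split; [rewrite Rminus_diag, Rabs_R0; lra|].
    rewrite sum0_taylor, pow_i by lia. replace (x + 0) with x by ring. unfold Rdiv. ring.
  - destruct (Taylor_Lagrange phi N x (x + s)) as [z [Hz E]]; [lra| intros; apply Hs |].
    exists z. split.
    + rewrite Rabs_pos_eq by lra. rewrite Rabs_pos_eq by lra. lra.
    + rewrite E. replace (x + s - x) with s by ring. reflexivity.
Qed.

Lemma smooth_exd (phi : R -> R) : smooth phi -> forall k x, ex_derive (Derive_n phi k) x.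
Proof. intros Hs k x. exact (Hs (S k) x). Qed.

Lemma leib (phi : R -> R) (Hs : smooth phi) n : forall x,
  Derive_n (fun y => y * phi y) n x = INR n * Derive_n phi (pred n) x + x * Derive_n phi n x.
Proof.
  induction n; intros x.
  - simpl. ring.
  - change (Derive_n (fun y => y * phi y) (S n) x) with (Derive (Derive_n (fun y => y * phi y) n) x).
    rewrite (Derive_ext _ (fun y => INR n * Derive_n phi (pred n) y + y * Derive_n phi n y)) by apply IHn.
    rewrite Derive_plus.
    2:{ apply ex_derive_scal, smooth_exd, Hs. }
    2:{ apply ex_derive_mult; [apply ex_derive_id | apply smooth_exd, Hs]. }
    rewrite Derive_scal, Derive_mult.
    2: apply ex_derive_id.
    2: apply smooth_exd, Hs.
    rewrite Derive_id. rewrite S_INR.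
    change (Derive (Derive_n phi n) x) with (Derive_n phi (S n) x).
    destruct n as [|n'].
    + simpl. ring.
    + change (Derive (Derive_n phi (pred (S n'))) x) with (Derive_n phi (S n') x).
      simpl pred. ring.
Qed.

Lemma leib_smooth (phi : R -> R) : smooth phi -> smooth (fun y => y * phi y).
Proof.
  intros Hs n x. destruct n as [|n]; [exact I|].
  change (ex_derive (Derive_n (fun y => y * phi y) n) x).
  apply (ex_derive_ext (fun y => INR n * Derive_n phi (pred n) y + y * Derive_n phi n y)).
  { intro; symmetry; apply leib; auto. }
  apply (ex_derive_plus (fun y => INR n * Derive_n phi (pred n) y) (fun y => y * Derive_n phi n y)).
  - apply ex_derive_scal, smooth_exd, Hs.
  - apply ex_derive_mult; [apply ex_derive_id | apply smooth_exd, Hs].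
Qed.

Lemma rd_weight (phi : R -> R) : rapidly_decaying phi ->
  forall n, exists A, forall x, (1 + Rabs x) ^ 2 * Rabs (Derive_n phi n x) <= A.
Proof.
  intros H n.
  destruct (H n 0%nat) as [C0 H0]. destruct (H n 1%nat) as [C1 H1]. destruct (H n 2%nat) as [C2 H2].
  exists (C0 + 2 * C1 + C2). intro x.
  specialize (H0 x); specialize (H1 x); specialize (H2 x).
  set (a := Rabs x) in *. set (d := Rabs (Derive_n phi n x)) in *.
  assert (E : (1 + a) ^ 2 * d = a ^ 0 * d + 2 * (a ^ 1 * d) + a ^ 2 * d) by (simpl; ring).
  lra.
Qed.

Lemma rd_x (phi : R -> R) : smooth phi -> rapidly_decaying phi ->
  rapidly_decaying (fun y => y * phi y).
Proof.
  intros Hs H n m.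
  destruct (H (pred n) m) as [C1 H1]. destruct (H n (S m)) as [C2 H2].
  exists (INR n * C1 + C2). intro x.
  rewrite leib by auto.
  specialize (H1 x); specialize (H2 x).
  eapply Rle_trans.
  { apply Rmult_le_compat_l; [apply pow_le, Rabs_pos|]. apply Rabs_triang. }
  rewrite Rmult_plus_distr_l, !Rabs_mult, (Rabs_pos_eq (INR n)) by apply pos_INR.
  assert (0 <= INR n) by apply pos_INR.
  replace (Rabs x ^ m * (INR n * Rabs (Derive_n phi (pred n) x)) + Rabs x ^ m * (Rabs x * Rabs (Derive_n phi n x)))
    with (INR n * (Rabs x ^ m * Rabs (Derive_n phi (pred n) x)) + Rabs x ^ S m * Rabs (Derive_n phi n x))
    by (simpl; ring).
  apply Rplus_le_compat; auto. apply Rmult_le_compat_l; auto.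
Qed.

Lemma is_derive_eq (g : R -> R) x l l' : is_derive g x l -> l = l' -> is_derive g x l'.
Proof. intros H <-; exact H. Qed.

Lemma QFP_eq (f : R -> R) (Hs : smooth f) x :
  QFP f x = f x + (x - uf f) * Derive f x + Tf f * Derive_n f 2 x.
Proof.
  unfold QFP. set (u := uf f). set (T := Tf f).
  assert (E1 : ex_derive f x) by exact (Hs 1%nat x).
  assert (E2 : ex_derive (Derive f) x) by exact (Hs 2%nat x).
  apply is_derive_unique.
  apply (is_derive_plus (fun w => (w - u) * f w) (fun w => T * Derive f w) x).
  - assert (Hm : is_derive (fun w => w - u) x 1) by (auto_derive; auto; ring).
    eapply is_derive_eq.
    + apply (is_derive_mult (fun w => w - u) f x 1 (Derive f x) Hm (Derive_correct f x E1)).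
      intros; apply Rmult_comm.
    + simpl. unfold plus, mult; simpl. ring.
  - eapply is_derive_eq.
    + apply is_derive_scal. apply Derive_correct, E2.
    + reflexivity.
Qed.

Lemma abs_le_inv x b : Rabs x <= b -> - b <= x <= b.
Proof. unfold Rabs; destruct (Rcase_abs x); lra. Qed.

Lemma lim_to_series (a : nat -> R) (l : R) : is_lim_seq (sum_n a) l -> is_series a l.
Proof. intro H; exact H. Qed.

Lemma tele_bound (a c : nat -> R) :
  (forall k, Rabs (a k) <= c k - c (S k)) -> (forall k, 0 <= c k) ->
  ex_series (fun k => Rabs (a k)) /\ Rabs (Series a) <= c 0%nat.
Proof.
  intros Ha Hc.
  assert (Hp : forall n, sum_n (fun k => Rabs (a k)) n <= c 0%nat - c (S n)).
  { induction n.
    - rewrite sum_O. apply Ha.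
    - rewrite sum_Sn. unfold plus; simpl. specialize (Ha (S n)). lra. }
  assert (Hinc : forall n, sum_n (fun k => Rabs (a k)) n <= sum_n (fun k => Rabs (a k)) (S n)).
  { intro n. rewrite sum_Sn. unfold plus; simpl. pose proof (Rabs_pos (a (S n))). lra. }
  destruct (ex_finite_lim_seq_incr (sum_n (fun k => Rabs (a k))) (c 0%nat) Hinc) as [l Hl].
  { intro n. specialize (Hp n). specialize (Hc (S n)). lra. }
  assert (Es : ex_series (fun k => Rabs (a k))) by (exists l; now apply lim_to_series).
  split; auto.
  eapply Rle_trans; [apply Series_Rabs; auto|].
  rewrite (is_series_unique (fun k => Rabs (a k)) l) by (now apply lim_to_series).
  assert (Hle := is_lim_seq_le (sum_n (fun k => Rabs (a k))) (fun _ => c 0%nat) l (c 0%nat)).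
  simpl in Hle. apply Hle; auto.
  - intro n. specialize (Hp n). specialize (Hc (S n)). lra.
  - apply is_lim_seq_const.
Qed.

Lemma tele_series (b : nat -> R) (L : R) : is_lim_seq b L ->
  is_series (fun k => b (S k) - b k) (L - b 0%nat).
Proof.
  intros H. apply lim_to_series.
  apply is_lim_seq_ext with (u := fun n => b (S n) - b 0%nat).
  - induction n.
    + rewrite sum_O. reflexivity.
    + rewrite sum_Sn, <- IHn. unfold plus; simpl. ring.
  - apply is_lim_seq_minus'; [|apply is_lim_seq_const].
    now apply (is_lim_seq_incr_1 b L).
Qed.

Lemma lim_seq_of_bound (b : nat -> R) (L : R) (B : nat -> R) :
  (forall eps, 0 < eps -> exists N, forall n, (N <= n)%nat -> B n < eps) ->
  (forall n, Rabs (b n - L) <= B n) -> is_lim_seq b L.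
Proof.
  intros HB Hb. apply is_lim_seq_spec. intro eps.
  destruct (HB eps (cond_pos eps)) as [N HN]. exists N. intros n Hn.
  specialize (HN n Hn). specialize (Hb n). lra.
Qed.

Lemma inv_small (A h : R) : 0 < h -> 0 <= A ->
  forall eps, 0 < eps -> exists N, forall n, (N <= n)%nat ->
    A / (1 + (INR n - 1/2) * h) < eps /\ 0 <= (INR n - 1/2) * h.
Proof.
  intros Hh HA eps He.
  destruct (nfloor_ex (A / (eps * h) + 1 / h + 1)) as [N HN].
  { apply Rplus_le_le_0_compat; [|lra]. apply Rplus_le_le_0_compat.
    apply Rdiv_le_0_compat; auto; nra. apply Rdiv_le_0_compat; lra. }
  exists (S N). intros n Hn.
  apply le_INR in Hn. rewrite S_INR in Hn.
  assert (H1 : A / (eps * h) + 1 / h < INR n) by lra.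
  assert (H2 : A / eps < (INR n - 1/2) * h).
  { assert (A / (eps * h) * h = A / eps) by (field; lra).
    assert (1 / h * h = 1) by (field; lra). nra. }
  assert (0 <= A / eps) by (apply Rdiv_le_0_compat; lra).
  split; [|lra].
  apply (Rmult_lt_reg_r (1 + (INR n - 1 / 2) * h)); [lra|].
  unfold Rdiv at 1. rewrite Rmult_assoc, Rinv_l, Rmult_1_r by lra.
  assert (A = A / eps * eps) by (field; lra). nra.
Qed.

Lemma deriv_bound (G g phi dphi : R -> R) u v : u <= v ->
  (forall t, u <= t <= v -> is_derive G t (g t)) ->
  (forall t, u <= t <= v -> is_derive phi t (dphi t)) ->
  (forall t, u <= t <= v -> Rabs (g t) <= dphi t) ->
  Rabs (G v - G u) <= phi v - phi u.
Proof.
  intros Huv HG Hp Hb.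
  destruct (Req_dec u v) as [E|Hne].
  { subst. rewrite !Rminus_diag, Rabs_R0. lra. }
  assert (Hlt : u < v) by lra.
  assert (Hmn : Rmin u v = u) by (apply Rmin_left; lra).
  assert (Hmx : Rmax u v = v) by (apply Rmax_right; lra).
  destruct (MVT_gen (fun t => G t - phi t) u v (fun t => g t - dphi t)) as [c1 [Hc1 E1]].
  { intros x Hx. rewrite Hmn, Hmx in Hx. apply (is_derive_minus G phi); [apply HG|apply Hp]; lra. }
  { intros x Hx. rewrite Hmn, Hmx in Hx. apply continuity_pt_filterlim.
    apply (ex_derive_continuous (fun t => G t - phi t)).
    exists (g x - dphi x). apply (is_derive_minus G phi); [apply HG|apply Hp]; lra. }
  destruct (MVT_gen (fun t => G t + phi t) u v (fun t => g t + dphi t)) as [c2 [Hc2 E2]].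
  { intros x Hx. rewrite Hmn, Hmx in Hx. apply (is_derive_plus G phi); [apply HG|apply Hp]; lra. }
  { intros x Hx. rewrite Hmn, Hmx in Hx. apply continuity_pt_filterlim.
    apply (ex_derive_continuous (fun t => G t + phi t)).
    exists (g x + dphi x). apply (is_derive_plus G phi); [apply HG|apply Hp]; lra. }
  rewrite Hmn, Hmx in Hc1, Hc2.
  assert (B1 := Hb c1 Hc1). assert (B2 := Hb c2 Hc2).
  apply abs_le_inv in B1. apply abs_le_inv in B2.
  apply Rabs_le. split; nra.
Qed.

Ltac factR := 
  try replace (INR (fact 0)) with 1 by (simpl; ring);
  try replace (INR (fact 1)) with 1 by (simpl; ring);
  try replace (INR (fact 2)) with 2 by (simpl; ring);
  try replace (INR (fact 3)) with 6 by (simpl; ring);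
  try replace (INR (fact 4)) with 24 by (simpl; ring);
  try replace (INR (fact 5)) with 120 by (simpl; ring);
  try replace (INR (fact 6)) with 720 by (simpl; ring).

Lemma taylor4 (phi : R -> R) (Hs : smooth phi) x s : exists z, Rabs (z - x) <= Rabs s /\
  phi (x + s) = phi x + s * Derive_n phi 1 x + s ^ 2 / 2 * Derive_n phi 2 x + s ^ 3 / 6 * Derive_n phi 3 x
     + s ^ 4 / 24 * Derive_n phi 4 x + s ^ 5 / 120 * Derive_n phi 5 z.
Proof.
  destruct (taylor_gen phi Hs 4 x s) as [z [Hz E]]. exists z. split; auto. rewrite E.
  cbn [sum_f_R0]. factR. change (Derive_n phi 0 x) with (phi x). field.
Qed.

Lemma taylor2 (phi : R -> R) (Hs : smooth phi) x s : exists z, Rabs (z - x) <= Rabs s /\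
  phi (x + s) = phi x + s * Derive_n phi 1 x + s ^ 2 / 2 * Derive_n phi 2 x + s ^ 3 / 6 * Derive_n phi 3 z.
Proof.
  destruct (taylor_gen phi Hs 2 x s) as [z [Hz E]]. exists z. split; auto. rewrite E.
  cbn [sum_f_R0]. factR. change (Derive_n phi 0 x) with (phi x). field.
Qed.

Lemma taylor5 (phi : R -> R) (Hs : smooth phi) x s : exists z, Rabs (z - x) <= Rabs s /\
  phi (x + s) = phi x + s * Derive_n phi 1 x + s ^ 2 / 2 * Derive_n phi 2 x + s ^ 3 / 6 * Derive_n phi 3 x
     + s ^ 4 / 24 * Derive_n phi 4 x + s ^ 5 / 120 * Derive_n phi 5 x + s ^ 6 / 720 * Derive_n phi 6 z.
Proof.
  destruct (taylor_gen phi Hs 5 x s) as [z [Hz E]]. exists z. split; auto. rewrite E.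
  cbn [sum_f_R0]. factR. change (Derive_n phi 0 x) with (phi x). field.
Qed.

Lemma wshift p c X : Rabs (p - c) <= 1/2 -> 0 <= X ->
  (1 + Rabs c) ^ 2 * X <= 4 * ((1 + Rabs p) ^ 2 * X).
Proof.
  intros Hpc HX.
  assert (Hc : Rabs c <= Rabs p + 1/2).
  { replace c with (p - (p - c)) by ring. eapply Rle_trans; [apply Rabs_triang|].
    rewrite Rabs_Ropp. lra. }
  pose proof (Rabs_pos c). pose proof (Rabs_pos p).
  assert ((1 + Rabs c) ^ 2 <= 4 * (1 + Rabs p) ^ 2) by (simpl; nra).
  nra.
Qed.

Section Prim.
Variable g : R -> R.
Hypothesis Hs : smooth g.

Lemma g_cont x : continuous g x.
Proof. exact (ex_derive_continuous g x (Hs 1%nat x)). Qed.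

Lemma g_exR a b : ex_RInt g a b.
Proof. apply (ex_RInt_continuous (V := R_CompleteNormedModule)). intros; apply g_cont. Qed.

Definition Gp (x : R) : R := RInt g 0 x.

Lemma Gp_der x : is_derive Gp x (g x).
Proof.
  apply (is_derive_RInt g Gp 0 x).
  - apply filter_forall. intro b. exact (RInt_correct (V := R_CompleteNormedModule) g 0 b (g_exR 0 b)).
  - apply g_cont.
Qed.

Lemma Gp_Dn m y : Derive_n Gp (S m) y = Derive_n g m y.
Proof.
  replace (S m) with (m + 1)%nat by lia. rewrite <- (Derive_n_comp Gp m 1%nat y).
  apply Derive_n_ext. intro t. apply is_derive_unique, Gp_der.
Qed.

Lemma Gp_smooth : smooth Gp.
Proof.
  intros k y. destruct k as [|k]; [exact I|].
  destruct k as [|k].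
  - exists (g y). apply Gp_der.
  - change (ex_derive (Derive_n Gp (S k)) y).
    apply (ex_derive_ext (Derive_n g k)). { intro; symmetry; apply Gp_Dn. }
    exact (Hs (S k) y).
Qed.

Lemma dg_Dn m y : Derive_n (Derive g) m y = Derive_n g (S m) y.
Proof.
  replace (S m) with (m + 1)%nat by lia. rewrite <- (Derive_n_comp g m 1%nat y). reflexivity.
Qed.

Lemma dg_smooth : smooth (Derive g).
Proof.
  intros k y. destruct k as [|k]; [exact I|].
  change (ex_derive (Derive_n (Derive g) k) y).
  apply (ex_derive_ext (Derive_n g (S k))). { intro; symmetry; apply dg_Dn. }
  exact (Hs (S (S k)) y).
Qed.


Definition Tc (h t : R) : R := Gp t - h ^ 2 / 24 * Derive g t.

Variable A : R.
Hypothesis HA4 : forall t, (1 + Rabs t) ^ 2 * Rabs (Derive_n g 4 t) <= A.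

Lemma cell c h : 0 < h <= 1 ->
  (1 + Rabs c) ^ 2 * Rabs (h * g c - (Tc h (c + h / 2) - Tc h (c - h / 2))) <= 4 * A * h ^ 5.
Proof.
  intros Hh.
  assert (Hs2 : Rabs (h / 2) <= 1/2) by (rewrite Rabs_pos_eq; lra).
  assert (Hs2' : Rabs (- (h / 2)) <= 1/2) by (rewrite Rabs_Ropp, Rabs_pos_eq; lra).
  destruct (taylor4 Gp Gp_smooth c (h / 2)) as [z1 [Hz1 E1]].
  destruct (taylor4 Gp Gp_smooth c (- (h / 2))) as [z2 [Hz2 E2]].
  destruct (taylor2 (Derive g) dg_smooth c (h / 2)) as [z3 [Hz3 E3]].
  destruct (taylor2 (Derive g) dg_smooth c (- (h / 2))) as [z4 [Hz4 E4]].
  rewrite !Gp_Dn in E1, E2. rewrite !dg_Dn in E3, E4.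
  unfold Tc. replace (c - h / 2) with (c + - (h / 2)) by ring.
  rewrite E1, E2, E3, E4.
  change (Derive_n g 0 c) with (g c).
  change (Derive g c) with (Derive_n g 1 c).
  set (a := Derive_n g 4 z1). set (b := Derive_n g 4 z2). set (d := Derive_n g 4 z3). set (e := Derive_n g 4 z4).
  match goal with |- _ * Rabs ?X <= _ => replace X with (h ^ 5 * (- (a + b) / 3840 + (d + e) / 1152)) by (unfold a, b, d, e; field) end.
  set (W := (1 + Rabs c) ^ 2).
  assert (Ba : W * Rabs a <= 4 * A) by (eapply Rle_trans; [apply wshift; [eapply Rle_trans; [exact Hz1|exact Hs2] | apply Rabs_pos] | ]; pose proof (HA4 z1) as Q; fold a in Q; lra).
  assert (Bb : W * Rabs b <= 4 * A) by (eapply Rle_trans; [apply wshift; [eapply Rle_trans; [exact Hz2|exact Hs2'] | apply Rabs_pos] | ]; pose proof (HA4 z2) as Q; fold b in Q; lra).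
  assert (Bd : W * Rabs d <= 4 * A) by (eapply Rle_trans; [apply wshift; [eapply Rle_trans; [exact Hz3|exact Hs2] | apply Rabs_pos] | ]; pose proof (HA4 z3) as Q; fold d in Q; lra).
  assert (Be : W * Rabs e <= 4 * A) by (eapply Rle_trans; [apply wshift; [eapply Rle_trans; [exact Hz4|exact Hs2'] | apply Rabs_pos] | ]; pose proof (HA4 z4) as Q; fold e in Q; lra).
  assert (HW : 0 <= W) by (unfold W; apply pow_le; pose proof (Rabs_pos c); lra).
  assert (H5 : 0 < h ^ 5) by (apply pow_lt; lra).
  rewrite Rabs_mult, (Rabs_pos_eq (h ^ 5)) by lra.
  assert (T1 : Rabs (- (a + b) / 3840 + (d + e) / 1152) <= (Rabs a + Rabs b) / 3840 + (Rabs d + Rabs e) / 1152).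
  { eapply Rle_trans; [apply Rabs_triang|]. unfold Rdiv. rewrite !Rabs_mult, Rabs_Ropp.
    rewrite !(Rabs_pos_eq (/ _)) by lra.
    pose proof (Rabs_triang a b). pose proof (Rabs_triang d e). lra. }
  assert (HA0 : 0 <= A).
  { pose proof (HA4 c) as Q. eapply Rle_trans; [|exact Q].
    apply Rmult_le_pos; [apply pow_le; pose proof (Rabs_pos c); lra | apply Rabs_pos]. }
  assert (T2 : W * Rabs (- (a + b) / 3840 + (d + e) / 1152) <= A).
  { eapply Rle_trans; [apply Rmult_le_compat_l; [exact HW| exact T1]|].
    replace (W * ((Rabs a + Rabs b) / 3840 + (Rabs d + Rabs e) / 1152)) with
      ((W * Rabs a + W * Rabs b) / 3840 + (W * Rabs d + W * Rabs e) / 1152) by field.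
    lra. }
  replace (W * (h ^ 5 * Rabs (- (a + b) / 3840 + (d + e) / 1152))) with (h ^ 5 * (W * Rabs (- (a + b) / 3840 + (d + e) / 1152))) by ring.
  apply Rle_trans with (h ^ 5 * A); [apply Rmult_le_compat_l; lra|]. assert (0 <= A * h ^ 5) by (apply Rmult_le_pos; lra). lra.
Qed.

End Prim.

Lemma pos_bound_div (A t X : R) : 0 <= t -> (1 + Rabs t) ^ 2 * X <= A -> X <= A / (1 + t) ^ 2.
Proof.
  intros Ht H. rewrite Rabs_pos_eq in H by lra.
  assert (0 < (1 + t) ^ 2) by (apply pow_lt; lra).
  apply (Rmult_le_reg_l ((1 + t) ^ 2)); auto. field_simplify; lra.
Qed.

Lemma prim_cauchy (G g : R -> R) A :
  (forall t, is_derive G t (g t)) -> (forall t, (1 + Rabs t) ^ 2 * Rabs (g t) <= A) ->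
  forall u v, 0 <= u <= v -> Rabs (G v - G u) <= A / (1 + u) - A / (1 + v).
Proof.
  intros HG HA u v Huv.
  replace (A / (1 + u) - A / (1 + v)) with ((- A / (1 + v)) - (- A / (1 + u))) by (field; lra).
  apply (deriv_bound G g (fun t => - A / (1 + t)) (fun t => A / (1 + t) ^ 2)); try lra.
  - intros; apply HG.
  - intros t Ht. auto_derive. lra. field. lra.
  - intros t Ht. apply pos_bound_div; [lra|apply HA].
Qed.

Lemma ball_R (x e y : R) : Rabs (y - x) < e -> ball x e y.
Proof. intro H. exact H. Qed.

Lemma ball_R' (x e y : R) : ball x e y -> Rabs (y - x) < e.
Proof. intro H. exact H. Qed.

Lemma prim_limit (G g : R -> R) A :
  (forall t, is_derive G t (g t)) -> (forall t, (1 + Rabs t) ^ 2 * Rabs (g t) <= A) ->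
  exists L, forall t, 0 <= t -> Rabs (G t - L) <= A / (1 + t).
Proof.
  intros HG HA.
  assert (HA0 : 0 <= A).
  { eapply Rle_trans; [|apply (HA 0)]. apply Rmult_le_pos; [apply pow_le; pose proof (Rabs_pos 0); lra|apply Rabs_pos]. }
  assert (HC := prim_cauchy G g A HG HA).
  assert (HC' : forall u v, 0 <= u -> 0 <= v -> Rabs (G v - G u) <= A / (1 + Rmin u v)).
  { intros u v Hu Hv. destruct (Rle_dec u v).
    - rewrite Rmin_left by lra. eapply Rle_trans; [apply HC; lra|].
      assert (0 <= A / (1 + v)) by (apply Rdiv_le_0_compat; lra). lra.
    - rewrite Rmin_right by lra. rewrite Rabs_minus_sym. eapply Rle_trans; [apply HC; lra|].
      assert (0 <= A / (1 + u)) by (apply Rdiv_le_0_compat; lra). lra. }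
  assert (Hsmall : forall eps, 0 < eps -> forall m, A / eps <= m -> 0 <= m -> A / (1 + m) < eps).
  { intros eps He m Hm Hm0. apply (Rmult_lt_reg_r (1 + m)); [lra|].
    unfold Rdiv at 1. rewrite Rmult_assoc, Rinv_l, Rmult_1_r by lra.
    assert (A = A / eps * eps) by (field; lra). nra. }
  destruct (proj1 (filterlim_locally_cauchy (F := Rbar_locally p_infty) G)) as [L HL].
  { intro eps. exists (fun t => Rmax 0 (A / eps) < t). split.
    - exists (Rmax 0 (A / eps)). auto.
    - intros u v Hu Hv. apply ball_R.
      pose proof (Rmax_l 0 (A / eps)). pose proof (Rmax_r 0 (A / eps)).
      eapply Rle_lt_trans; [apply HC'; lra|].
      apply Hsmall; [apply cond_pos| |].
      + apply Rmin_glb; lra.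
      + apply Rmin_glb; lra. }
  exists L. intros t Ht.
  apply le_epsilon. intros eps He.
  assert (HL' := proj1 (filterlim_locally G L) HL (mkposreal eps He)).
  destruct HL' as [M HM].
  set (v := Rmax (M + 1) t).
  assert (Hv : M < v) by (unfold v; pose proof (Rmax_l (M + 1) t); lra).
  assert (Hv2 : t <= v) by (unfold v; apply Rmax_r).
  specialize (HM v Hv). apply ball_R' in HM. simpl in HM.
  replace (G t - L) with ((G t - G v) + (G v - L)) by ring.
  eapply Rle_trans; [apply Rabs_triang|].
  rewrite Rabs_minus_sym. apply Rplus_le_compat.
  - eapply Rle_trans; [apply HC; lra|]. assert (0 <= A / (1 + v)) by (apply Rdiv_le_0_compat; lra). lra.
  - lra.
Qed.

Section Mid.
Variable g : R -> R.
Hypothesis Hs : smooth g.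
Variable A : R.
Hypothesis HA0 : forall t, (1 + Rabs t) ^ 2 * Rabs (g t) <= A.
Hypothesis HA1 : forall t, (1 + Rabs t) ^ 2 * Rabs (Derive_n g 1 t) <= A.
Hypothesis HA4 : forall t, (1 + Rabs t) ^ 2 * Rabs (Derive_n g 4 t) <= A.

Lemma A_nonneg : 0 <= A.
Proof.
  eapply Rle_trans; [|apply (HA0 0)].
  apply Rmult_le_pos; [apply pow_le; pose proof (Rabs_pos 0); lra|apply Rabs_pos].
Qed.

Lemma lim_plus : exists Lp, forall t, 0 <= t -> Rabs (Gp g t - Lp) <= A / (1 + t).
Proof. apply (prim_limit (Gp g) g A); [apply Gp_der, Hs | exact HA0]. Qed.

Lemma lim_minus : exists Lm, forall t, t <= 0 -> Rabs (Gp g t - Lm) <= A / (1 - t).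
Proof.
  destruct (prim_limit (fun t => - Gp g (- t)) (fun t => g (- t)) A) as [L HL].
  - intro t.
    assert (E : ex_derive (Gp g) (- t)) by (exists (g (- t)); apply Gp_der, Hs).
    auto_derive. exact E.
    replace (Derive (fun x : R => Gp g x) (- t)) with (g (- t)) by (symmetry; apply is_derive_unique; apply Gp_der, Hs). ring.
  - intro t. rewrite <- Rabs_Ropp. apply HA0.
  - exists (- L). intros t Ht. specialize (HL (- t) ltac:(lra)).
    replace (- - t) with t in HL by ring. replace (1 - t) with (1 + - t) by ring.
    replace (Gp g t - - L) with (- (- Gp g t - L)) by ring. rewrite Rabs_Ropp. exact HL.
Qed.


Lemma small_M (eps : R) : 0 < eps -> exists M, 0 <= M /\ forall t, M <= t -> A / (1 + t) < eps.
Proof.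
  intros He. pose proof A_nonneg as HA.
  exists (A / eps). split; [apply Rdiv_le_0_compat; lra|].
  intros t Ht. assert (0 <= t) by (assert (0 <= A / eps) by (apply Rdiv_le_0_compat; lra); lra).
  apply (Rmult_lt_reg_r (1 + t)); [lra|].
  unfold Rdiv at 1. rewrite Rmult_assoc, Rinv_l, Rmult_1_r by lra.
  assert (A = A / eps * eps) by (field; lra). nra.
Qed.

Lemma rint_gen Lp Lm :
  (forall t, 0 <= t -> Rabs (Gp g t - Lp) <= A / (1 + t)) ->
  (forall t, t <= 0 -> Rabs (Gp g t - Lm) <= A / (1 - t)) ->
  is_RInt_gen g (Rbar_locally m_infty) (Rbar_locally p_infty) (Lp - Lm).
Proof.
  intros Hp Hm.
  apply (filterlimi_lim_ext (fun ab => Gp g (snd ab) - Gp g (fst ab))).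
  - intros [a b]. simpl.
    apply (is_RInt_derive (V := R_CompleteNormedModule) (Gp g) g a b).
    + intros; apply Gp_der, Hs.
    + intros; apply g_cont, Hs.
  - apply filterlim_locally. intro eps.
    destruct (small_M (eps / 2)) as [M [HM0 HM]]; [pose proof (cond_pos eps); lra|].
    apply Filter_prod with (Q := fun a => a < - M) (R := fun b => M < b).
    + exists (- M). auto.
    + exists M. auto.
    + intros a b Ha Hb. apply ball_R. simpl.
      replace (Gp g b - Gp g a - (Lp - Lm)) with ((Gp g b - Lp) - (Gp g a - Lm)) by ring.
      eapply Rle_lt_trans; [apply Rabs_triang|]. rewrite Rabs_Ropp.
      specialize (Hp b ltac:(lra)). specialize (Hm a ltac:(lra)).
      assert (A / (1 + b) < eps / 2) by (apply HM; lra).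
      assert (A / (1 - a) < eps / 2) by (replace (1 - a) with (1 + - a) by ring; apply HM; lra).
      lra.
Qed.


Lemma weight_le (c h K X : R) : 0 <= c -> 0 < h <= 1 -> 0 <= X ->
  (1 + c) ^ 2 * X <= K -> X <= 2 * K / h * (1 / (1 + c) - 1 / (1 + (c + h))).
Proof.
  intros Hc Hh HX HK.
  replace (2 * K / h * (1 / (1 + c) - 1 / (1 + (c + h)))) with (2 * K / ((1 + c) * (1 + c + h))) by (field; lra).
  assert (HP : 0 < (1 + c) ^ 2) by (apply pow_lt; lra).
  assert (HK0 : 0 <= K) by (eapply Rle_trans; [|exact HK]; apply Rmult_le_pos; lra).
  assert (X <= K / (1 + c) ^ 2).
  { apply (Rmult_le_reg_l ((1 + c) ^ 2)); auto. field_simplify; lra. }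
  eapply Rle_trans; [exact H|].
  unfold Rdiv. apply Rle_trans with (K * (2 * / ((1 + c) * (1 + c + h)))).
  - apply Rmult_le_compat_l; auto.
    rewrite <- (Rinv_inv 2). rewrite <- Rinv_mult.
    apply Rinv_le_contravar.
    + apply Rmult_lt_0_compat; [lra|]. apply Rmult_lt_0_compat; lra.
    + simpl. nra.
  - lra.
Qed.

Section Sums.
Variable h : R.
Hypothesis Hh : 0 < h <= 1.
Variables Lp Lm : R.
Hypothesis Hp : forall t, 0 <= t -> Rabs (Gp g t - Lp) <= A / (1 + t).
Hypothesis Hm : forall t, t <= 0 -> Rabs (Gp g t - Lm) <= A / (1 - t).

Let w (k : nat) := 1 / (1 + INR k * h).

Lemma w_nonneg k : 0 <= 2 * A / h * w k.
Proof.
  pose proof A_nonneg. pose proof (pos_INR k). unfold w.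
  apply Rmult_le_pos; [apply Rdiv_le_0_compat; lra|]. apply Rdiv_le_0_compat; nra.
Qed.

Lemma w_step k : w k - w (S k) = 1 / (1 + INR k * h) - 1 / (1 + (INR k * h + h)).
Proof. unfold w. rewrite S_INR. f_equal. f_equal. f_equal. ring. Qed.

Lemma absg_pos k : Rabs (g (INR k * h)) <= 2 * A / h * w k - 2 * A / h * w (S k).
Proof.
  rewrite <- Rmult_minus_distr_l, w_step.
  pose proof (pos_INR k).
  apply weight_le; try lra; [nra|apply Rabs_pos|].
  pose proof (HA0 (INR k * h)). rewrite Rabs_pos_eq in H0 by nra. exact H0.
Qed.

Lemma absg_neg k : Rabs (g (- (INR k + 1) * h)) <= 2 * A / h * w k - 2 * A / h * w (S k).
Proof.
  rewrite <- Rmult_minus_distr_l, w_step.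
  pose proof (pos_INR k).
  apply weight_le; try lra; [nra|apply Rabs_pos|].
  pose proof (HA0 (- (INR k + 1) * h)). rewrite Rabs_left1 in H0 by nra.
  eapply Rle_trans; [|exact H0]. apply Rmult_le_compat_r; [apply Rabs_pos|].
  apply pow_incr. nra.
Qed.

Let b (k : nat) := Tc g h ((INR k - 1/2) * h).
Let b' (k : nat) := Tc g h (- (INR k + 1/2) * h).

Lemma e_pos k : Rabs (h * g (INR k * h) - (b (S k) - b k)) <=
  8 * A * h ^ 4 * w k - 8 * A * h ^ 4 * w (S k).
Proof.
  rewrite <- Rmult_minus_distr_l, w_step. unfold b.
  replace ((INR (S k) - 1/2) * h) with (INR k * h + h / 2) by (rewrite S_INR; field).
  replace ((INR k - 1/2) * h) with (INR k * h - h / 2) by field.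
  pose proof (pos_INR k).
  replace (8 * A * h ^ 4) with (2 * (4 * A * h ^ 5) / h) by (field; lra).
  apply weight_le; try lra; [nra|apply Rabs_pos|].
  pose proof (cell g Hs A HA4 (INR k * h) h Hh). rewrite Rabs_pos_eq in H0 by nra. exact H0.
Qed.

Lemma e_neg k : Rabs (h * g (- (INR k + 1) * h) - (b' k - b' (S k))) <=
  8 * A * h ^ 4 * w k - 8 * A * h ^ 4 * w (S k).
Proof.
  rewrite <- Rmult_minus_distr_l, w_step. unfold b'.
  replace (- (INR (S k) + 1/2) * h) with (- (INR k + 1) * h - h / 2) by (rewrite S_INR; field).
  replace (- (INR k + 1/2) * h) with (- (INR k + 1) * h + h / 2) by field.
  pose proof (pos_INR k).
  replace (8 * A * h ^ 4) with (2 * (4 * A * h ^ 5) / h) by (field; lra).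
  apply weight_le; try lra; [nra|apply Rabs_pos|].
  pose proof (cell g Hs A HA4 (- (INR k + 1) * h) h Hh). rewrite Rabs_left1 in H0 by nra.
  rewrite Rabs_minus_sym. rewrite Rabs_minus_sym in H0.
  eapply Rle_trans; [|exact H0]. apply Rmult_le_compat_r; [apply Rabs_pos|].
  apply pow_incr. nra.
Qed.


Lemma gp_bound t : Rabs (Derive g t) <= A / (1 + Rabs t).
Proof.
  pose proof (HA1 t) as H. change (Derive_n g 1 t) with (Derive g t) in H.
  pose proof (Rabs_pos t). pose proof (Rabs_pos (Derive g t)).
  apply (Rmult_le_reg_l (1 + Rabs t)); [lra|].
  field_simplify; [|lra].
  assert ((1 + Rabs t) * Rabs (Derive g t) <= (1 + Rabs t) ^ 2 * Rabs (Derive g t)) by (simpl; nra).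
  lra.
Qed.

Lemma inv_mono (x y : R) : 0 <= y <= x -> A / (1 + x) <= A / (1 + y).
Proof.
  intros Hxy. pose proof A_nonneg. unfold Rdiv. apply Rmult_le_compat_l; auto.
  apply Rinv_le_contravar; lra.
Qed.

Lemma b_lim : is_lim_seq b Lp.
Proof.
  apply is_lim_seq_spec. intro eps.
  destruct (inv_small (2 * A) h ltac:(lra) ltac:(pose proof A_nonneg; lra) eps (cond_pos eps)) as [N HN].
  exists N. intros n Hn. destruct (HN n Hn) as [H1 H2].
  set (t := (INR n - 1/2) * h) in *.
  unfold b, Tc. fold t.
  replace (Gp g t - h ^ 2 / 24 * Derive g t - Lp) with ((Gp g t - Lp) - h ^ 2 / 24 * Derive g t) by ring.
  eapply Rle_lt_trans; [apply Rabs_triang|]. rewrite Rabs_Ropp, Rabs_mult.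
  rewrite (Rabs_pos_eq (h ^ 2 / 24)) by (apply Rdiv_le_0_compat; [apply pow_le|]; lra).
  pose proof (Hp t H2). pose proof (gp_bound t). rewrite (Rabs_pos_eq t) in H0 by lra.
  assert (h ^ 2 / 24 <= 1) by (simpl; nra).
  assert (0 <= A / (1 + t)) by (apply Rdiv_le_0_compat; pose proof A_nonneg; lra).
  assert (h ^ 2 / 24 * Rabs (Derive g t) <= A / (1 + t)).
  { apply Rle_trans with (1 * (A / (1 + t))); [|lra].
    apply Rmult_le_compat; auto; [apply Rdiv_le_0_compat; [apply pow_le|]; lra| apply Rabs_pos]. }
  replace (2 * A / (1 + t)) with (2 * (A / (1 + t))) in H1 by (field; lra). lra.
Qed.

Lemma b'_lim : is_lim_seq b' Lm.
Proof.
  apply is_lim_seq_spec. intro eps.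
  destruct (inv_small (2 * A) h ltac:(lra) ltac:(pose proof A_nonneg; lra) eps (cond_pos eps)) as [N HN].
  exists N. intros n Hn. destruct (HN n Hn) as [H1 H2].
  set (t := (INR n - 1/2) * h) in *.
  set (t' := - (INR n + 1/2) * h).
  assert (Ht' : Rabs t' = - t') by (apply Rabs_left1; unfold t'; pose proof (pos_INR n); nra).
  assert (Htt : t <= - t') by (unfold t, t'; lra).
  unfold b', Tc. fold t'.
  replace (Gp g t' - h ^ 2 / 24 * Derive g t' - Lm) with ((Gp g t' - Lm) - h ^ 2 / 24 * Derive g t') by ring.
  eapply Rle_lt_trans; [apply Rabs_triang|]. rewrite Rabs_Ropp, Rabs_mult.
  rewrite (Rabs_pos_eq (h ^ 2 / 24)) by (apply Rdiv_le_0_compat; [apply pow_le|]; lra).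
  assert (Hn' : t' <= 0) by lra.
  pose proof (Hm t' Hn'). pose proof (gp_bound t'). rewrite Ht' in H0.
  replace (1 - t') with (1 + - t') in H by ring.
  pose proof (inv_mono (- t') t ltac:(lra)).
  assert (h ^ 2 / 24 <= 1) by (simpl; nra).
  assert (0 <= A / (1 + - t')) by (apply Rdiv_le_0_compat; pose proof A_nonneg; lra).
  assert (h ^ 2 / 24 * Rabs (Derive g t') <= A / (1 + - t')).
  { apply Rle_trans with (1 * (A / (1 + - t'))); [|lra].
    apply Rmult_le_compat; auto; [apply Rdiv_le_0_compat; [apply pow_le|]; lra| apply Rabs_pos]. }
  replace (2 * A / (1 + t)) with (2 * (A / (1 + t))) in H1 by (field; lra). lra.
Qed.


Lemma w0 : w 0 = 1.
Proof. unfold w. simpl. field. Qed.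

Lemma series_pos : ex_series (fun k => Rabs (g (INR k * h))) /\
  Rabs (Series (fun k => h * g (INR k * h)) - (Lp - b 0%nat)) <= 8 * A * h ^ 4.
Proof.
  split.
  - apply (tele_bound _ (fun k => 2 * A / h * w k)); [apply absg_pos | apply w_nonneg].
  - set (e := fun k => h * g (INR k * h) - (b (S k) - b k)).
    assert (He : forall k, 0 <= 8 * A * h ^ 4 * w k).
    { intro k. pose proof (w_nonneg k). pose proof A_nonneg.
      replace (8 * A * h ^ 4 * w k) with (4 * h ^ 5 * (2 * A / h * w k)) by (field; lra).
      apply Rmult_le_pos; auto. apply Rmult_le_pos; [lra|apply pow_le; lra]. }
    destruct (tele_bound e (fun k => 8 * A * h ^ 4 * w k) (e_pos) He) as [E1 E2].
    rewrite w0, Rmult_1_r in E2.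
    assert (Hs1 := tele_series b Lp b_lim).
    assert (Hs2 := Series_correct e (ex_series_Rabs e E1)).
    assert (Hs3 := is_series_plus _ _ _ _ Hs1 Hs2).
    assert (Hs4 : is_series (fun k => h * g (INR k * h)) ((Lp - b 0%nat) + Series e)).
    { eapply is_series_ext; [|exact Hs3]. intro n. unfold e. simpl. unfold plus; simpl. ring. }
    rewrite (is_series_unique _ _ Hs4).
    replace (Lp - b 0%nat + Series e - (Lp - b 0%nat)) with (Series e) by ring. exact E2.
Qed.

Lemma series_neg : ex_series (fun k => Rabs (g (- (INR k + 1) * h))) /\
  Rabs (Series (fun k => h * g (- (INR k + 1) * h)) - (b' 0%nat - Lm)) <= 8 * A * h ^ 4.
Proof.
  split.
  - apply (tele_bound _ (fun k => 2 * A / h * w k)); [apply absg_neg | apply w_nonneg].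
  - set (e := fun k => h * g (- (INR k + 1) * h) - (b' k - b' (S k))).
    assert (He : forall k, 0 <= 8 * A * h ^ 4 * w k).
    { intro k. pose proof (w_nonneg k). pose proof A_nonneg.
      replace (8 * A * h ^ 4 * w k) with (4 * h ^ 5 * (2 * A / h * w k)) by (field; lra).
      apply Rmult_le_pos; auto. apply Rmult_le_pos; [lra|apply pow_le; lra]. }
    destruct (tele_bound e (fun k => 8 * A * h ^ 4 * w k) (e_neg) He) as [E1 E2].
    rewrite w0, Rmult_1_r in E2.
    assert (Hs1 := is_series_scal_l (-1) _ _ (tele_series b' Lm b'_lim)).
    assert (Hs2 := Series_correct e (ex_series_Rabs e E1)).
    assert (Hs3 := is_series_plus _ _ _ _ Hs1 Hs2).
    assert (Hs4 : is_series (fun k => h * g (- (INR k + 1) * h)) ((b' 0%nat - Lm) + Series e)).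
    { replace ((b' 0%nat - Lm) + Series e) with (plus (scal (-1) (Lm - b' 0%nat)) (Series e))
        by (unfold plus, scal; simpl; unfold mult; simpl; ring).
      eapply is_series_ext; [|exact Hs3]. intro n. unfold e. unfold plus, scal; simpl. unfold mult; simpl. ring. }
    rewrite (is_series_unique _ _ Hs4).
    replace (b' 0%nat - Lm + Series e - (b' 0%nat - Lm)) with (Series e) by ring. exact E2.
Qed.

Lemma b_b' : b 0%nat = b' 0%nat.
Proof. unfold b, b'. f_equal. simpl. field. Qed.

End Sums.

Theorem midpoint : exists I, is_RInt_gen g (Rbar_locally m_infty) (Rbar_locally p_infty) I /\
  forall h, 0 < h <= 1 -> zsummable (fun k => g (IZR k * h)) /\
    Rabs (h * zsum (fun k => g (IZR k * h)) - I) <= 16 * A * h ^ 4.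
Proof.
  destruct lim_plus as [Lp Hp]. destruct lim_minus as [Lm Hm].
  exists (Lp - Lm). split; [apply rint_gen; auto|].
  intros h Hh.
  destruct (series_pos h Hh Lp Hp) as [P1 P2].
  destruct (series_neg h Hh Lm Hm) as [N1 N2].
  assert (Ep : forall k, IZR (Z.of_nat k) * h = INR k * h) by (intro; rewrite <- INR_IZR_INZ; reflexivity).
  assert (En : forall k, IZR (- Z.of_nat k - 1) * h = - (INR k + 1) * h)
    by (intro; rewrite minus_IZR, opp_IZR, <- INR_IZR_INZ; ring).
  split.
  - split.
    + eapply exs_ext; [|exact P1]. intro; cbv beta; now rewrite Ep.
    + eapply exs_ext; [|exact N1]. intro; cbv beta; now rewrite En.
  - unfold zsum. rewrite Rmult_plus_distr_l, <- !Series_scal_l.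
    rewrite (Series_ext _ (fun k => h * g (INR k * h))) by (intro; now rewrite Ep).
    rewrite (Series_ext (fun k => h * g (IZR (- Z.of_nat k - 1) * h)) (fun k => h * g (- (INR k + 1) * h))) by (intro; now rewrite En).
    rewrite <- (b_b' h) in N2.
    match goal with |- Rabs (?S1 + ?S2 - _) <= _ =>
      replace (S1 + S2 - (Lp - Lm)) with ((S1 - (Lp - Tc g h ((INR 0 - 1/2) * h))) + (S2 - (Tc g h ((INR 0 - 1/2) * h) - Lm))) by ring end.
    eapply Rle_trans; [apply Rabs_triang|]. lra.
Qed.

End Mid.

Definition Q4form (dv ub Tb ut Tt x fm2 fm1 f0 f1 f2 : R) : R :=
  let fb0 := - (1/16) * fm1 + (9/16) * f0 + (9/16) * f1 - (1/16) * f2 in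
  let fbm1 := - (1/16) * fm2 + (9/16) * fm1 + (9/16) * f0 - (1/16) * f1 in
  let Qb := ((x + dv / 2 - ub) * fb0 - (x - dv / 2 - ub) * fbm1) / dv
            + Tb * (- fm2 + 28 * fm1 - 54 * f0 + 28 * f1 - f2) / (24 * dv ^ 2) in
  let Q2p := / dv * ((f2 + f1) / 2 * (x + 3 * dv / 2 - ut) - (f1 + f0) / 2 * (x + dv / 2 - ut))
             + Tt / dv ^ 2 * (f2 - 2 * f1 + f0) in
  let Q20 := / dv * ((f1 + f0) / 2 * (x + dv / 2 - ut) - (f0 + fm1) / 2 * (x - dv / 2 - ut))
             + Tt / dv ^ 2 * (f1 - 2 * f0 + fm1) in
  let Q2m := / dv * ((f0 + fm1) / 2 * (x - dv / 2 - ut) - (fm1 + fm2) / 2 * (x - 3 * dv / 2 - ut))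
             + Tt / dv ^ 2 * (f0 - 2 * fm1 + fm2) in
  Qb - / 24 * (Q2p - 2 * Q20 + Q2m).

Lemma Q4_form dv F j : dv <> 0 ->
  Q4 dv F j = Q4form dv (ubreve dv F) (Tbreve dv F) (utilde dv F) (Ttilde dv F) (IZR j * dv)
     (F (j - 2)%Z) (F (j - 1)%Z) (F j) (F (j + 1)%Z) (F (j + 2)%Z).
Proof.
  intros Hdv.
  set (ub := ubreve dv F); set (Tb := Tbreve dv F); set (ut := utilde dv F); set (Tt := Ttilde dv F).
  unfold Q4, Qbar4, Q2, fbreve, fmid, vhalf, vj, Q4form. cbv zeta.
  fold ub Tb ut Tt.
  zcanon F. izr_canon.
  rewrite ?plus_IZR, ?minus_IZR, ?opp_IZR.
  field. auto.
Qed.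

Fixpoint evt (h : R) (L : list (R * nat * R * R)) : R :=
  match L with
  | nil => 0
  | cons (c, e, p, d) L' => c * h ^ e * p * d + evt h L'
  end.

Fixpoint wt (L : list (R * nat * R * R)) : R :=
  match L with
  | nil => 0
  | cons (c, _, _, _) L' => Rabs c + wt L'
  end.

Fixpoint allb (B : R) (L : list (R * nat * R * R)) : Prop :=
  match L with
  | nil => True
  | cons (_, _, p, d) L' => Rabs p <= B /\ Rabs d <= B /\ allb B L'
  end.

Lemma pow_le_one h e : 0 <= h <= 1 -> h ^ e <= 1.
Proof.
  intros Hh. induction e; simpl; [lra|].
  replace 1 with (1 * 1) by ring. apply Rmult_le_compat; try lra. apply pow_le; lra.
Qed.

Lemma evt_bound h B L : 0 <= h <= 1 -> 0 <= B -> allb B L -> Rabs (evt h L) <= wt L * B ^ 2.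
Proof.
  intros Hh HB. induction L as [|[[[c e] p] d] L IH]; simpl.
  - rewrite Rabs_R0. lra.
  - intros [Hp [Hd HL]].
    eapply Rle_trans; [apply Rabs_triang|].
    rewrite Rmult_plus_distr_r. apply Rplus_le_compat; [|auto].
    rewrite !Rabs_mult.
    assert (Rabs (h ^ e) <= 1).
    { rewrite <- RPow_abs, Rabs_pos_eq by lra. apply pow_le_one. lra. }
    pose proof (Rabs_pos c). pose proof (Rabs_pos (h ^ e)). pose proof (Rabs_pos p). pose proof (Rabs_pos d).
    assert (Rabs c * Rabs (h ^ e) <= Rabs c) by nra.
    assert (Rabs p * Rabs d <= B * B) by nra.
    replace (Rabs c * Rabs (h ^ e) * Rabs p * Rabs d) with ((Rabs c * Rabs (h ^ e)) * (Rabs p * Rabs d)) by ring.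
    replace (B ^ 2) with (B * B) by ring.
    apply Rmult_le_compat; [apply Rmult_le_pos; auto | apply Rmult_le_pos; auto | exact H4 | lra].
Qed.

Definition Lloc (h u T ub Tb x D1 D2 D4 D5 rm2 rm1 r1 r2 : R) : list (R * nat * R * R) :=
  (((-7 / 96), 0%nat, 1, D4) :: ((1), 0%nat, ((Tb - T) / h ^ 4), D2) :: ((-1), 0%nat, ((ub - u) / h ^ 4), D1) :: ((-1 / 12), 0%nat, T, r2) :: ((4 / 3), 0%nat, T, r1) :: ((4 / 3), 0%nat, T, rm1) :: ((-1 / 12), 0%nat, T, rm2) :: ((1 / 30), 0%nat, u, D5) :: ((1 / 12), 1%nat, u, r2) :: ((-2 / 3), 1%nat, u, r1) :: ((2 / 3), 1%nat, u, rm1) :: ((-1 / 12), 1%nat, u, rm2) :: ((-7 / 96), 2%nat, 1, r2) :: ((7 / 24), 2%nat, 1, r1) :: ((7 / 24), 2%nat, 1, rm1) :: ((-7 / 96), 2%nat, 1, rm2) :: ((-1 / 12), 4%nat, ((Tb - T) / h ^ 4), r2) :: ((4 / 3), 4%nat, ((Tb - T) / h ^ 4), r1) :: ((4 / 3), 4%nat, ((Tb - T) / h ^ 4), rm1) :: ((-1 / 12), 4%nat, ((Tb - T) / h ^ 4), rm2) :: ((1 / 30), 4%nat, ((ub - u) / h ^ 4), D5) :: ((1 / 12), 5%nat, ((ub - u) / h ^ 4), r2) :: ((-2 / 3), 5%nat, ((ub - u) / h ^ 4), r1) :: ((2 / 3), 5%nat, ((ub - u) / h ^ 4), rm1) ::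 ((-1 / 12), 5%nat, ((ub - u) / h ^ 4), rm2) :: ((-1 / 30), 0%nat, 1, (x * D5)) :: ((-1 / 12), 1%nat, 1, (x * r2)) :: ((2 / 3), 1%nat, 1, (x * r1)) :: ((-2 / 3), 1%nat, 1, (x * rm1)) :: ((1 / 12), 1%nat, 1, (x * rm2)) :: nil)%list.

Definition tay (h D0 D1 D2 D3 D4 D5 r : R) (k : R) : R :=
  D0 + (k * h) * D1 + (k * h) ^ 2 / 2 * D2 + (k * h) ^ 3 / 6 * D3 + (k * h) ^ 4 / 24 * D4
  + (k * h) ^ 5 / 120 * D5 + h ^ 6 * r.

Lemma loc_identity h u T ub Tb x D0 D1 D2 D3 D4 D5 rm2 rm1 r1 r2 : h <> 0 ->
  Q4form h ub Tb ub (Tb + h ^ 2 / 4) x (tay h D0 D1 D2 D3 D4 D5 rm2 (-2)) (tay h D0 D1 D2 D3 D4 D5 rm1 (-1))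
     D0 (tay h D0 D1 D2 D3 D4 D5 r1 1) (tay h D0 D1 D2 D3 D4 D5 r2 2)
  - (D0 + (x - u) * D1 + T * D2) = h ^ 4 * evt h (Lloc h u T ub Tb x D1 D2 D4 D5 rm2 rm1 r1 r2).
Proof.
  intros Hh. unfold Q4form, tay, Lloc. cbv zeta. simpl evt. field. auto.
Qed.

Lemma disc_rel (dv : R) (F : Z -> R) : dv <> 0 ->
  (forall i, (i <= 2)%nat -> zsummable (mom F i)) -> zsum (mom F 0) <> 0 ->
  dens dv F = dv * zsum (mom F 0) /\
  ubreve dv F = dv * zsum (mom F 1) / zsum (mom F 0) /\
  Tbreve dv F = ubreve dv F ^ 2 - 2 * dv * ubreve dv F * zsum (mom F 1) / zsum (mom F 0)
                + dv ^ 2 * zsum (mom F 2) / zsum (mom F 0) /\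
  utilde dv F = ubreve dv F /\
  Ttilde dv F = Tbreve dv F + dv ^ 2 / 4.
Proof.
  intros Hdv M HZ0.
  set (Z0 := zsum (mom F 0)). set (Z1 := zsum (mom F 1)). set (Z2 := zsum (mom F 2)).
  fold Z0 in HZ0.
  assert (Hd : dens dv F = dv * Z0).
  { unfold dens, Z0. f_equal. apply zsum_ext. intro; unfold mom; simpl; ring. }
  set (ub := ubreve dv F). set (Tb := Tbreve dv F).
  assert (Hub : ub = dv * Z1 / Z0).
  { unfold ub, ubreve. rewrite (zsum_ext _ _ (u_lin dv F)).
    rewrite zsum_lin by (simpl; repeat split; apply M; lia).
    unfold L_u; simpl linZ. fold Z0 Z1 Z2. rewrite Hd. field. auto. }
  assert (HTb : Tb = ub ^ 2 - 2 * dv * ub * Z1 / Z0 + dv ^ 2 * Z2 / Z0).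
  { unfold Tb, Tbreve. rewrite (zsum_ext _ _ (T_lin dv F)). fold ub.
    rewrite zsum_lin by (simpl; repeat split; apply M; lia).
    unfold L_T; simpl linZ. fold Z0 Z1 Z2. rewrite Hd. field. auto. }
  assert (Hut : utilde dv F = ub).
  { unfold utilde. rewrite (zsum_ext _ _ (ut_lin dv F)).
    rewrite zsum_lin by (simpl; repeat split; apply M; lia).
    unfold L_ut; simpl linZ. fold Z0 Z1 Z2. rewrite Hd, Hub. field. auto. }
  repeat split; auto.
  unfold Ttilde. rewrite (zsum_ext _ _ (Tt_lin dv F)). rewrite Hut.
  rewrite zsum_lin by (simpl; repeat split; apply M; lia).
  unfold L_Tt; simpl linZ. fold Z0 Z1 Z2. rewrite Hd, HTb. field. auto.
Qed.

Lemma sch_mid (phi : R -> R) : smooth phi -> rapidly_decaying phi ->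
  exists I K, 0 <= K /\ is_RInt_gen phi (Rbar_locally m_infty) (Rbar_locally p_infty) I /\
   forall h, 0 < h <= 1 -> zsummable (fun k => phi (IZR k * h)) /\
     Rabs (h * zsum (fun k => phi (IZR k * h)) - I) <= K * h ^ 4.
Proof.
  intros Hs Hr.
  destruct (rd_weight phi Hr 0) as [A0 H0].
  destruct (rd_weight phi Hr 1) as [A1 H1].
  destruct (rd_weight phi Hr 4) as [A4 H4].
  set (A := Rmax A0 (Rmax A1 A4)).
  assert (B0 : forall t, (1 + Rabs t) ^ 2 * Rabs (phi t) <= A).
  { intro t. eapply Rle_trans; [apply (H0 t)|]. apply Rmax_l. }
  assert (B1 : forall t, (1 + Rabs t) ^ 2 * Rabs (Derive_n phi 1 t) <= A).
  { intro t. eapply Rle_trans; [apply (H1 t)|]. unfold A. eapply Rle_trans; [|apply Rmax_r]. apply Rmax_l. }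
  assert (B4 : forall t, (1 + Rabs t) ^ 2 * Rabs (Derive_n phi 4 t) <= A).
  { intro t. eapply Rle_trans; [apply (H4 t)|]. unfold A. eapply Rle_trans; [|apply Rmax_r]. apply Rmax_r. }
  destruct (midpoint phi Hs A B0 B1 B4) as [I [HI HS]].
  exists I, (16 * A). split; [pose proof (A_nonneg phi A B0); lra|]. split; auto.
Qed.

Lemma rint_val (phi : R -> R) I :
  is_RInt_gen phi (Rbar_locally m_infty) (Rbar_locally p_infty) I -> Rint phi = I.
Proof.
  intro H. unfold Rint. exact (is_RInt_gen_unique (V := R_CompleteNormedModule) phi I H).
Qed.

Lemma rint_comb (f : R -> R) (u I0 I1 I2 : R) :
  is_RInt_gen f (Rbar_locally m_infty) (Rbar_locally p_infty) I0 ->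
  is_RInt_gen (fun v => v * f v) (Rbar_locally m_infty) (Rbar_locally p_infty) I1 ->
  is_RInt_gen (fun v => v * (v * f v)) (Rbar_locally m_infty) (Rbar_locally p_infty) I2 ->
  is_RInt_gen (fun v => (v - u) ^ 2 * f v) (Rbar_locally m_infty) (Rbar_locally p_infty)
    (I2 - 2 * u * I1 + u ^ 2 * I0).
Proof.
  intros H0 H1 H2.
  assert (H := is_RInt_gen_plus _ _ _ _ (is_RInt_gen_plus _ _ _ _ H2 (is_RInt_gen_scal _ (- 2 * u) _ H1))
                 (is_RInt_gen_scal _ (u ^ 2) _ H0)).
  replace (I2 - 2 * u * I1 + u ^ 2 * I0) with (plus (plus I2 (scal (- 2 * u) I1)) (scal (u ^ 2) I0))
    by (unfold plus, scal; simpl; unfold mult; simpl; ring).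
  eapply is_RInt_gen_ext; [| exact H].
  apply filter_forall. intros ab x _. unfold plus, scal; simpl; unfold mult; simpl. ring.
Qed.

Lemma ratio_err (S0 I0 S I K0 K e : R) : 0 < I0 -> 0 <= e ->
  Rabs (S0 - I0) <= K0 * e -> K0 * e <= I0 / 2 -> Rabs (S - I) <= K * e ->
  Rabs (S / S0 - I / I0) <= e * (2 * (K * I0 + Rabs I * K0) / I0 ^ 2).
Proof.
  intros HI0 He H0 Hs H.
  assert (HS0 : I0 / 2 <= S0) by (apply abs_le_inv in H0; lra).
  assert (HS0p : 0 < S0) by lra.
  replace (S / S0 - I / I0) with (((S - I) * I0 - I * (S0 - I0)) / (S0 * I0)) by (field; lra).
  unfold Rdiv at 1. rewrite Rabs_mult, Rabs_inv, (Rabs_pos_eq (S0 * I0)) by nra.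
  assert (N : Rabs ((S - I) * I0 - I * (S0 - I0)) <= e * (K * I0 + Rabs I * K0)).
  { eapply Rle_trans; [apply Rabs_triang|]. rewrite Rabs_Ropp, !Rabs_mult, (Rabs_pos_eq I0) by lra.
    pose proof (Rabs_pos I).
    assert (Rabs (S - I) * I0 <= K * e * I0) by (apply Rmult_le_compat_r; lra).
    assert (Rabs I * Rabs (S0 - I0) <= Rabs I * (K0 * e)) by (apply Rmult_le_compat_l; lra).
    nra. }
  assert (Hd : I0 ^ 2 / 2 <= S0 * I0) by (simpl; nra).
  assert (HN0 : 0 <= e * (K * I0 + Rabs I * K0)) by (eapply Rle_trans; [apply Rabs_pos|exact N]).
  apply Rle_trans with (e * (K * I0 + Rabs I * K0) * / (S0 * I0)).
  - apply Rmult_le_compat_r; [apply Rlt_le, Rinv_0_lt_compat; nra | exact N].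
  - replace (e * (2 * (K * I0 + Rabs I * K0) / I0 ^ 2)) with (e * (K * I0 + Rabs I * K0) * / (I0 ^ 2 / 2))
      by (field; lra).
    apply Rmult_le_compat_l; auto.
    apply Rinv_le_contravar; [simpl; nra | exact Hd].
Qed.

Lemma rd0 (f : R -> R) n : rapidly_decaying f -> exists c, forall x, Rabs (Derive_n f n x) <= c.
Proof.
  intros H. destruct (H n 0%nat) as [c Hc]. exists c. intro x. specialize (Hc x). simpl in Hc. lra.
Qed.

Lemma rd1 (f : R -> R) n : rapidly_decaying f -> exists c, forall x, Rabs (x * Derive_n f n x) <= c.
Proof.
  intros H. destruct (H n 1%nat) as [c Hc]. exists c. intro x. specialize (Hc x). simpl in Hc.
  rewrite Rabs_mult. lra.
Qed.

Lemma div_h4 (a h K : R) : 0 < h -> Rabs a <= h ^ 4 * K -> Rabs (a / h ^ 4) <= K.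
Proof.
  intros Hh H. assert (0 < h ^ 4) by (apply pow_lt; lra).
  unfold Rdiv. rewrite Rabs_mult, Rabs_inv, (Rabs_pos_eq (h ^ 4)) by lra.
  apply (Rmult_le_reg_l (h ^ 4)); auto. field_simplify; lra.
Qed.

Lemma taylor_k (f : R -> R) (Hs : smooth f) x h (k : R) : 0 < h <= 1 -> Rabs k <= 2 ->
  exists r, f (x + k * h) = tay h (f x) (Derive_n f 1 x) (Derive_n f 2 x) (Derive_n f 3 x)
                       (Derive_n f 4 x) (Derive_n f 5 x) r k /\
    exists z, Rabs (z - x) <= 2 /\ r = k ^ 6 / 720 * Derive_n f 6 z.
Proof.
  intros Hh Hk.
  destruct (taylor5 f Hs x (k * h)) as [z [Hz E]].
  exists (k ^ 6 / 720 * Derive_n f 6 z). split.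
  - rewrite E. unfold tay. field.
  - exists z. split; auto. eapply Rle_trans; [exact Hz|]. rewrite Rabs_mult, (Rabs_pos_eq h) by lra. nra.
Qed.

Lemma r_bounds (f : R -> R) x (k : R) z c60 c61 : Rabs k <= 2 -> Rabs (z - x) <= 2 ->
  (forall y, Rabs (Derive_n f 6 y) <= c60) -> (forall y, Rabs (y * Derive_n f 6 y) <= c61) ->
  Rabs (k ^ 6 / 720 * Derive_n f 6 z) <= c60 /\
  Rabs (x * (k ^ 6 / 720 * Derive_n f 6 z)) <= c61 + 2 * c60.
Proof.
  intros Hk Hz H0 H1.
  assert (Hk6 : Rabs (k ^ 6 / 720) <= 1).
  { unfold Rdiv. rewrite Rabs_mult, <- RPow_abs, Rabs_inv, (Rabs_pos_eq 720) by lra.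
    pose proof (Rabs_pos k).
    assert (Rabs k ^ 6 <= 2 ^ 6) by (apply pow_incr; lra). simpl in H. simpl. nra. }
  pose proof (H0 z). pose proof (H1 z). pose proof (Rabs_pos (Derive_n f 6 z)).
  pose proof (Rabs_pos (k ^ 6 / 720)).
  split.
  - rewrite Rabs_mult. nra.
  - rewrite !Rabs_mult.
    assert (Rabs x <= Rabs z + 2).
    { replace x with (z - (z - x)) by ring. eapply Rle_trans; [apply Rabs_triang|]. rewrite Rabs_Ropp. lra. }
    rewrite Rabs_mult in H2.
    assert (Rabs x * Rabs (Derive_n f 6 z) <= c61 + 2 * c60).
    { apply Rle_trans with ((Rabs z + 2) * Rabs (Derive_n f 6 z)); [apply Rmult_le_compat_r; lra|]. nra. }
    pose proof (Rabs_pos x).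
    assert (Rabs x * (Rabs (k ^ 6 / 720) * Rabs (Derive_n f 6 z)) = Rabs (k ^ 6 / 720) * (Rabs x * Rabs (Derive_n f 6 z))) by ring.
    assert (0 <= Rabs x * Rabs (Derive_n f 6 z)) by nra.
    assert (Rabs (k ^ 6 / 720) * (Rabs x * Rabs (Derive_n f 6 z)) <= 1 * (Rabs x * Rabs (Derive_n f 6 z))).
    { apply Rmult_le_compat_r; lra. }
    lra.
Qed.

Theorem part1 : forall f : R -> R,
     smooth f -> rapidly_decaying f -> 0 < nf f -> 0 < Tf f ->
     exists C delta : R, 0 < delta /\
       forall dv : R, 0 < dv < delta -> forall j : Z,
         Rabs (QFP f (vj dv j) - Q4 dv (fun k => f (vj dv k)) j) <= C * dv ^ 4.
Proof.
  intros f Hs Hr Hn _.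
  set (g1 := fun v => v * f v). set (g2 := fun v => v * (v * f v)).
  assert (Hs1 : smooth g1) by apply (leib_smooth f Hs).
  assert (Hr1 : rapidly_decaying g1) by apply (rd_x f Hs Hr).
  assert (Hs2 : smooth g2) by apply (leib_smooth g1 Hs1).
  assert (Hr2 : rapidly_decaying g2) by apply (rd_x g1 Hs1 Hr1).
  destruct (sch_mid f Hs Hr) as [I0 [K0 [HK0 [HI0 HS0]]]].
  destruct (sch_mid g1 Hs1 Hr1) as [I1 [K1 [HK1 [HI1 HS1]]]].
  destruct (sch_mid g2 Hs2 Hr2) as [I2 [K2 [HK2 [HI2 HS2]]]].
  assert (En : nf f = I0) by (unfold nf; apply rint_val; exact HI0).
  assert (Hu : uf f = I1 / I0) by (unfold uf; rewrite En; f_equal; apply rint_val; exact HI1).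
  set (u := uf f) in *.
  assert (HT : Tf f = (I2 - 2 * u * I1 + u ^ 2 * I0) / I0).
  { unfold Tf. fold u. rewrite En. f_equal. apply rint_val. apply rint_comb; auto. }
  set (T := Tf f) in *.
  rewrite En in Hn.
  assert (HT' : T = I2 / I0 - u ^ 2) by (rewrite HT, Hu; field; lra).
  destruct (rd0 f 1 Hr) as [c10 P10]. destruct (rd0 f 2 Hr) as [c20 P20].
  destruct (rd0 f 4 Hr) as [c40 P40]. destruct (rd0 f 5 Hr) as [c50 P50].
  destruct (rd0 f 6 Hr) as [c60 P60]. destruct (rd1 f 5 Hr) as [c51 P51].
  destruct (rd1 f 6 Hr) as [c61 P61].
  set (Cu := 2 * (K1 * I0 + Rabs I1 * K0) / I0 ^ 2).
  set (C2 := 2 * (K2 * I0 + Rabs I2 * K0) / I0 ^ 2).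
  set (CT := C2 + Cu * (2 * Rabs u + Cu)).
  assert (HCu : 0 <= Cu).
  { unfold Cu. apply Rdiv_le_0_compat; [|apply pow_lt; lra].
    pose proof (Rabs_pos I1). apply Rmult_le_pos; [lra|]. apply Rplus_le_le_0_compat; apply Rmult_le_pos; lra. }
  assert (HC2 : 0 <= C2).
  { unfold C2. apply Rdiv_le_0_compat; [|apply pow_lt; lra].
    pose proof (Rabs_pos I2). apply Rmult_le_pos; [lra|]. apply Rplus_le_le_0_compat; apply Rmult_le_pos; lra. }
  set (B := 1 + Rabs u + Rabs T + Cu + Rabs CT + Rabs c10 + Rabs c20 + Rabs c40 + Rabs c50 + Rabs c51
            + Rabs c60 + Rabs (c61 + 2 * c60)).
  assert (HB : forall a c, a <= c -> Rabs c <= B - 1 - Rabs u - Rabs T - Cu -> a <= B).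
  { intros a c Hac Hc. pose proof (Rle_abs c). pose proof (Rabs_pos u). pose proof (Rabs_pos T). lra. }
  assert (Pos : 0 <= Rabs u /\ 0 <= Rabs T /\ 0 <= Rabs CT /\ 0 <= Rabs c10 /\ 0 <= Rabs c20 /\ 0 <= Rabs c40
     /\ 0 <= Rabs c50 /\ 0 <= Rabs c51 /\ 0 <= Rabs c60 /\ 0 <= Rabs (c61 + 2 * c60)).
  { repeat split; apply Rabs_pos. }
  set (delta := Rmin 1 (I0 / (2 * (K0 + 1)))).
  assert (Hdel : 0 < delta).
  { unfold delta. apply Rmin_glb_lt; [lra|]. apply Rdiv_lt_0_compat; lra. }
  exists (wt (Lloc 0 0 0 0 0 0 0 0 0 0 0 0 0 0) * B ^ 2), delta. split; auto.
  intros dv [Hdv Hdvd] j.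
  assert (Hd1 : dv <= 1) by (pose proof (Rmin_l 1 (I0 / (2 * (K0 + 1)))); fold delta in H; lra).
  assert (Hh : 0 < dv <= 1) by lra.
  assert (H4le : dv ^ 4 <= dv).
  { replace (dv ^ 4) with (dv * dv ^ 3) by ring. assert (dv ^ 3 <= 1) by (apply pow_le_one; lra).
    apply Rle_trans with (dv * 1); [apply Rmult_le_compat_l; lra | lra]. }
  assert (H4pos : 0 < dv ^ 4) by (apply pow_lt; lra).
  assert (HK0e : K0 * dv ^ 4 <= I0 / 2).
  { assert (dv < I0 / (2 * (K0 + 1))) by (pose proof (Rmin_r 1 (I0 / (2 * (K0 + 1)))); fold delta in H; lra).
    apply Rle_trans with (K0 * dv); [apply Rmult_le_compat_l; lra|].
    apply Rle_trans with (K0 * (I0 / (2 * (K0 + 1)))); [apply Rmult_le_compat_l; lra|].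
    replace (K0 * (I0 / (2 * (K0 + 1)))) with (I0 / 2 * (K0 / (K0 + 1))) by (field; lra).
    replace (I0 / 2) with (I0 / 2 * 1) at 2 by ring.
    apply Rmult_le_compat_l; [lra|]. apply (Rmult_le_reg_r (K0 + 1)); [lra|]. field_simplify; lra. }
  destruct (HS0 dv Hh) as [Z0s E0]. destruct (HS1 dv Hh) as [Z1s E1]. destruct (HS2 dv Hh) as [Z2s E2].
  set (F := fun k => f (vj dv k)).
  set (S0 := dv * zsum (fun k => f (IZR k * dv))) in *.
  set (S1 := dv * zsum (fun k => g1 (IZR k * dv))) in *.
  set (S2 := dv * zsum (fun k => g2 (IZR k * dv))) in *.
  assert (Hdv0 : dv <> 0) by lra.
  assert (M0 : forall k, mom F 0 k = f (IZR k * dv)) by (intro; unfold mom, F, vj; simpl; ring).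
  assert (M1 : forall k, mom F 1 k = / dv * g1 (IZR k * dv)) by (intro; unfold mom, F, vj, g1; field; auto).
  assert (M2 : forall k, mom F 2 k = (/ dv) ^ 2 * g2 (IZR k * dv)) by (intro; unfold mom, F, vj, g2; field; auto).
  assert (Msum : forall i, (i <= 2)%nat -> zsummable (mom F i)).
  { intros i Hi. destruct i as [|[|[|i]]]; try lia.
    - eapply zsummable_ext; [intro; symmetry; apply M0|]. exact Z0s.
    - eapply zsummable_ext; [intro; symmetry; apply M1|]. apply zsummable_scal; exact Z1s.
    - eapply zsummable_ext; [intro; symmetry; apply M2|]. apply zsummable_scal; exact Z2s. }
  assert (ZZ0 : zsum (mom F 0) = S0 / dv) by (unfold S0; rewrite (zsum_ext _ _ M0); field; auto).
  assert (ZZ1 : zsum (mom F 1) = S1 / dv ^ 2) by (unfold S1; rewrite (zsum_ext _ _ M1), zsum_scal; field; auto).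
  assert (ZZ2 : zsum (mom F 2) = S2 / dv ^ 3) by (unfold S2; rewrite (zsum_ext _ _ M2), zsum_scal; field; auto).
  assert (HS0p : I0 / 2 <= S0) by (apply abs_le_inv in E0; lra).
  assert (HZ0 : zsum (mom F 0) <> 0) by (rewrite ZZ0; unfold Rdiv; apply Rmult_integral_contrapositive_currified; [lra| apply Rinv_neq_0_compat; lra]).
  destruct (disc_rel dv F Hdv0 Msum HZ0) as [Hdens [Hub [HTb [Hut HTt]]]].
  set (ub := ubreve dv F) in *. set (Tb := Tbreve dv F) in *.
  assert (HS0n : S0 <> 0) by lra.
  assert (Hub' : ub = S1 / S0) by (rewrite Hub, ZZ1, ZZ0; field; auto).
  assert (HTb' : Tb = S2 / S0 - (S1 / S0) ^ 2).
  { rewrite HTb, ZZ1, ZZ0, ZZ2, Hub'. field. auto. }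
  rewrite <- Hub' in HTb'.
  assert (Eu : Rabs (ub - u) <= dv ^ 4 * Cu).
  { rewrite Hub', Hu. apply (ratio_err S0 I0 S1 I1 K0 K1 (dv ^ 4)); auto; lra. }
  assert (E2r : Rabs (S2 / S0 - I2 / I0) <= dv ^ 4 * C2).
  { apply (ratio_err S0 I0 S2 I2 K0 K2 (dv ^ 4)); auto; lra. }
  assert (ET : Rabs (Tb - T) <= dv ^ 4 * CT).
  { rewrite HTb', HT'.
    replace (S2 / S0 - ub ^ 2 - (I2 / I0 - u ^ 2)) with ((S2 / S0 - I2 / I0) - (ub - u) * (ub + u)) by ring.
    eapply Rle_trans; [apply Rabs_triang|]. rewrite Rabs_Ropp, Rabs_mult.
    assert (Hsum : Rabs (ub + u) <= Cu + 2 * Rabs u).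
    { replace (ub + u) with ((ub - u) + 2 * u) by ring. eapply Rle_trans; [apply Rabs_triang|].
      rewrite Rabs_mult, (Rabs_pos_eq 2) by lra.
      assert (dv ^ 4 * Cu <= Cu) by (replace Cu with (1 * Cu) at 2 by ring; apply Rmult_le_compat_r; [lra|]; lra).
      lra. }
    unfold CT.
    assert (Rabs (ub - u) * Rabs (ub + u) <= dv ^ 4 * Cu * (Cu + 2 * Rabs u)).
    { apply Rmult_le_compat; auto; apply Rabs_pos. }
    replace (dv ^ 4 * (C2 + Cu * (2 * Rabs u + Cu))) with (dv ^ 4 * C2 + dv ^ 4 * Cu * (Cu + 2 * Rabs u)) by ring.
    lra. }
  set (x := IZR j * dv).
  assert (Hk2 : Rabs (-2) <= 2) by (rewrite Rabs_left by lra; lra).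
  assert (Hk1 : Rabs (-1) <= 2) by (rewrite Rabs_left by lra; lra).
  assert (Hk1' : Rabs 1 <= 2) by (rewrite Rabs_R1; lra).
  assert (Hk2' : Rabs 2 <= 2) by (rewrite Rabs_pos_eq by lra; lra).
  destruct (taylor_k f Hs x dv (-2) Hh Hk2) as [rm2 [Tm2 [zm2 [Hzm2 Erm2]]]].
  destruct (taylor_k f Hs x dv (-1) Hh Hk1) as [rm1 [Tm1 [zm1 [Hzm1 Erm1]]]].
  destruct (taylor_k f Hs x dv 1 Hh Hk1') as [r1 [Tp1 [zp1 [Hzp1 Erp1]]]].
  destruct (taylor_k f Hs x dv 2 Hh Hk2') as [r2 [Tp2 [zp2 [Hzp2 Erp2]]]].
  destruct (r_bounds f x (-2) zm2 c60 c61 Hk2 Hzm2 P60 P61) as [Bm2 Bxm2]. rewrite <- Erm2 in Bm2, Bxm2.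
  destruct (r_bounds f x (-1) zm1 c60 c61 Hk1 Hzm1 P60 P61) as [Bm1 Bxm1]. rewrite <- Erm1 in Bm1, Bxm1.
  destruct (r_bounds f x 1 zp1 c60 c61 Hk1' Hzp1 P60 P61) as [Bp1 Bxp1]. rewrite <- Erp1 in Bp1, Bxp1.
  destruct (r_bounds f x 2 zp2 c60 c61 Hk2' Hzp2 P60 P61) as [Bp2 Bxp2]. rewrite <- Erp2 in Bp2, Bxp2.
  assert (Fm2 : F (j - 2)%Z = f (x + -2 * dv)) by (unfold F, vj, x; f_equal; rewrite minus_IZR; ring).
  assert (Fm1 : F (j - 1)%Z = f (x + -1 * dv)) by (unfold F, vj, x; f_equal; rewrite minus_IZR; ring).
  assert (Fp1 : F (j + 1)%Z = f (x + 1 * dv)) by (unfold F, vj, x; f_equal; rewrite plus_IZR; ring).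
  assert (Fp2 : F (j + 2)%Z = f (x + 2 * dv)) by (unfold F, vj, x; f_equal; rewrite plus_IZR; ring).
  assert (F0 : F j = f x) by reflexivity.
  change (vj dv j) with x. fold F.
  rewrite QFP_eq by exact Hs. fold u T.
  rewrite (Q4_form dv F j Hdv0). fold ub Tb. rewrite Hut, HTt. fold x.
  rewrite Fm2, Fm1, Fp1, Fp2, F0, Tm2, Tm1, Tp1, Tp2.
  change (Derive f x) with (Derive_n f 1 x).
  rewrite Rabs_minus_sym.
  rewrite (loc_identity dv u T ub Tb x (f x)) by exact Hdv0.
  rewrite Rabs_mult, (Rabs_pos_eq (dv ^ 4)) by lra.
  replace (wt (Lloc 0 0 0 0 0 0 0 0 0 0 0 0 0 0)) with
    (wt (Lloc dv u T ub Tb x (Derive_n f 1 x) (Derive_n f 2 x) (Derive_n f 4 x) (Derive_n f 5 x) rm2 rm1 r1 r2))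
    by reflexivity.
  match goal with |- ?h4 * _ <= ?W * ?BB * _ =>
    apply Rle_trans with (h4 * (W * BB)); [apply Rmult_le_compat_l; [lra|] | right; ring] end.
  apply evt_bound; [lra| unfold B; destruct Pos as (?&?&?&?&?&?&?&?&?&?); lra |].
  destruct Pos as (Q1&Q2&Q3&Q4&Q5&Q6&Q7&Q8&Q9&Q10).
  assert (B1 : Rabs 1 <= B) by (rewrite Rabs_R1; unfold B; lra).
  assert (Bu : Rabs u <= B) by (unfold B; lra).
  assert (BT : Rabs T <= B) by (unfold B; lra).
  assert (Beu : Rabs ((ub - u) / dv ^ 4) <= B) by (eapply Rle_trans; [apply div_h4; [lra|exact Eu]|]; unfold B; lra).
  assert (BeT : Rabs ((Tb - T) / dv ^ 4) <= B).
  { eapply Rle_trans; [apply div_h4; [lra|exact ET]|]. pose proof (Rle_abs CT). unfold B; lra. }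
  assert (BD1 : Rabs (Derive_n f 1 x) <= B) by (pose proof (P10 x); pose proof (Rle_abs c10); unfold B; lra).
  assert (BD2 : Rabs (Derive_n f 2 x) <= B) by (pose proof (P20 x); pose proof (Rle_abs c20); unfold B; lra).
  assert (BD4 : Rabs (Derive_n f 4 x) <= B) by (pose proof (P40 x); pose proof (Rle_abs c40); unfold B; lra).
  assert (BD5 : Rabs (Derive_n f 5 x) <= B) by (pose proof (P50 x); pose proof (Rle_abs c50); unfold B; lra).
  assert (BxD5 : Rabs (x * Derive_n f 5 x) <= B) by (pose proof (P51 x); pose proof (Rle_abs c51); unfold B; lra).
  pose proof (Rle_abs c60). pose proof (Rle_abs (c61 + 2 * c60)).
  assert (Br : forall r, Rabs r <= c60 -> Rabs r <= B) by (intros; unfold B; lra).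
  assert (Bxr : forall r, Rabs r <= c61 + 2 * c60 -> Rabs r <= B) by (intros; unfold B; lra).
  unfold Lloc. simpl allb.
  repeat split; first [assumption | apply Br; assumption | apply Bxr; assumption].
Qed.


Theorem proposition2 :
  (* (i) fourth-order consistency *)
  (forall f : R -> R,
     smooth f -> rapidly_decaying f -> 0 < nf f -> 0 < Tf f ->
     exists C delta : R, 0 < delta /\
       forall dv : R, 0 < dv < delta -> forall j : Z,
         Rabs (QFP f (vj dv j) - Q4 dv (fun k => f (vj dv k)) j) <= C * dv ^ 4)
  /\
  (* (ii) exact conservation of mass, momentum and energy *)
  (forall (dv : R) (f : Z -> R),
     0 < dv ->
     zsummable (fun j => (1 + Rabs (vj dv j)) ^ 3 * f j) ->
     0 < dens dv f -> 0 < Tbreve dv f -> 0 < Ttilde dv f ->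
     zsum (fun j => Q4 dv f j * dv) = 0 /\
     zsum (fun j => Q4 dv f j * vj dv j * dv) = 0 /\
     zsum (fun j => Q4 dv f j * (vj dv j ^ 2 / 2) * dv) = 0).
Proof.
  split.
  - exact part1.
  - exact part2.
Qed.
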